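(* Let $T$ be a complete first-order theory with monster model $\mathcal{U}$. The relation $\geq_{\mathbb{E}}$ on the collection of global Keisler measures (in finitely many variables) is a preorder; that is, for all global Keisler measures $\mu,\nu,\eta$: $\mu\geq_{\mathbb{E}}\mu$, and if $\mu\geq_{\mathbb{E}}\nu$ and $\nu\geq_{\mathbb{E}}\eta$ then $\mu\geq_{\mathbb{E}}\eta$.
   Context: ''Small'' means of cardinality less than the saturation of $\mathcal{U}$. For $B\subseteq\mathcal{U}$ and a finite tuple of variables $x$, $\mathcal{L}_x(B)$ is the Boolean algebra of formulas in free variables $x$ with parameters from $B$ modulo $T$-equivalence; $\mathcal{L}_x(B)$ is identified with a subalgebra of $\mathcal{L}_{xy}(B)$ via $\varphi(x)\mapsto\varphi(x)\wedge y=y$. A Keisler measure over $B$ in $x$ is a finitely additive probability measure on $\mathcal{L}_x(B)$; $\mathfrak{M}_x(B)$ denotes the set of these; global means over $\mathcal{U}$. For $\omega\in\mathfrak{M}_{xy}(B)$, $\pi_x(\omega)(\varphi(x))=\omega(\varphi(x)\wedge y=y)$ (similarly $\pi_y$), and $\omega|_C$ is restriction to $\mathcal{L}_{xy}(C)$. For $\mu\in\mathfrak{M}_x(\mathcal{U})$, $\nu\in\mathfrak{M}_y(\mathcal{U})$ ($x,y$ disjoint) and small $A$: $\mu\geq_{\mathbb{E},A}\nu$ means there is $\lambda\in\mathfrak{M}_{xy}(A)$ with $\pi_x(\lambda)=\mu|_A$ such that every $\omega\in\mathfrak{M}_{xy}(\mathcal{U})$ with $\omega|_A=\lambda$ and $\pi_x(\omega)=\mu$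 satisfies $\pi_y(\omega)=\nu$. $\mu\geq_{\mathbb{E}}\nu$ means $\mu\geq_{\mathbb{E},A}\nu$ for some small $A$. As a relation on global measures, $\mu\geq_{\mathbb{E}}\nu$ is evaluated after writing $\mu$ and $\nu$ in distinct (disjoint) tuples of variables (so in particular $\mu\geq_{\mathbb{E}}\mu$ means $\mu(x)\geq_{\mathbb{E}}\mu(y)$ for a copy $y$ of $x$). *)

(* Defs.v *)
From Stdlib Require Import Reals List.
From Stdlib Require Fin.
Open Scope R_scope.

Set Implicit Arguments.

Record signature := Signature {
  funcs : Type; rels : Type;
  farity : funcs -> nat; rarity : rels -> nat }.

Record structure (L : signature) := Structure {
  carrier :> Type;
  carrier_inhabited : inhabited carrier;
  funI : forall f : funcs L, (Fin.t (farity L f) -> carrier) -> carrier;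
  relI : forall r : rels L, (Fin.t (rarity L r) -> carrier) -> Prop }.

Section FOL.
Variable L : signature.
Variable U : structure L.

Inductive term : Type :=
| tvar : nat -> term
| tpar : U -> term
| tapp : forall f : funcs L, (Fin.t (farity L f) -> term) -> term.

Inductive formula : Type :=
| fFalse : formula
| fEq : term -> term -> formula
| fRel : forall r : rels L, (Fin.t (rarity L r) -> term) -> formula
| fNeg : formula -> formula
| fAnd : formula -> formula -> formula
| fEx : formula -> formula.   (* binds de Bruijn variable 0 *)

Definition fTrue := fNeg fFalse.
Definition fOr (p q : formula) := fNeg (fAnd (fNeg p) (fNeg q)).

Definition scons (m : U) (a : nat -> U) : nat -> U :=
  fun i => match i with 0 => m | S i => a i end.

Fixpoint teval (a : nat -> U) (t : term) : U :=
  match t with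
  | tvar i => a i
  | tpar c => c
  | tapp f args => funI U f (fun j => teval a (args j))
  end.

Fixpoint sat (a : nat -> U) (p : formula) : Prop :=
  match p with
  | fFalse => False
  | fEq t1 t2 => teval a t1 = teval a t2
  | fRel r args => relI U r (fun j => teval a (args j))
  | fNeg q => ~ sat a q
  | fAnd q1 q2 => sat a q1 /\ sat a q2
  | fEx q => exists m, sat (scons m a) q
  end.

Fixpoint tbound (k : nat) (t : term) : Prop :=
  match t with
  | tvar i => (i < k)%nat
  | tpar _ => True
  | tapp f args => forall j, tbound k (args j)
  end.

Fixpoint fbound (k : nat) (p : formula) : Prop :=
  match p with
  | fFalse => True
  | fEq t1 t2 => tbound k t1 /\ tbound k t2
  | fRel r args => forall j, tbound k (args j)
  | fNeg q => fbound k q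
  | fAnd q1 q2 => fbound k q1 /\ fbound k q2
  | fEx q => fbound (S k) q
  end.

Fixpoint tparams (B : U -> Prop) (t : term) : Prop :=
  match t with
  | tvar _ => True
  | tpar c => B c
  | tapp f args => forall j, tparams B (args j)
  end.

Fixpoint fparams (B : U -> Prop) (p : formula) : Prop :=
  match p with
  | fFalse => True
  | fEq t1 t2 => tparams B t1 /\ tparams B t2
  | fRel r args => forall j, tparams B (args j)
  | fNeg q => fparams B q
  | fAnd q1 q2 => fparams B q1 /\ fparams B q2
  | fEx q => fparams B q
  end.

Fixpoint tmap (g : U -> U) (t : term) : term :=
  match t with
  | tvar i => tvar i
  | tpar c => tpar (g c)
  | tapp f args => tapp f (fun j => tmap g (args j))
  end.

Fixpoint fmap (g : U -> U) (p : formula) : formula :=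
  match p with
  | fFalse => fFalse
  | fEq t1 t2 => fEq (tmap g t1) (tmap g t2)
  | fRel r args => fRel r (fun j => tmap g (args j))
  | fNeg q => fNeg (fmap g q)
  | fAnd q1 q2 => fAnd (fmap g q1) (fmap g q2)
  | fEx q => fEx (fmap g q)
  end.

Fixpoint tlift (c k : nat) (t : term) : term :=
  match t with
  | tvar i => tvar (if Nat.ltb i c then i else i + k)
  | tpar x => tpar x
  | tapp f args => tapp f (fun j => tlift c k (args j))
  end.

Fixpoint flift (c k : nat) (p : formula) : formula :=
  match p with
  | fFalse => fFalse
  | fEq t1 t2 => fEq (tlift c k t1) (tlift c k t2)
  | fRel r args => fRel r (fun j => tlift c k (args j))
  | fNeg q => fNeg (flift c k q)
  | fAnd q1 q2 => fAnd (flift c k q1) (flift c k q2)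
  | fEx q => fEx (flift (S c) k q)
  end.

(** [LF B n p]: p is a formula in the variables x = (0,...,n-1)
    with parameters from B, i.e. a representative of an element of L_x(B). *)
Definition LF (B : U -> Prop) (n : nat) (p : formula) : Prop :=
  fbound n p /\ fparams B p.

(** T-equivalence (T = Th(U) complete, so equivalence in U). *)
Definition fequiv (p q : formula) : Prop := forall a, sat a p <-> sat a q.

Definition allU : U -> Prop := fun _ => True.

(** Keisler measure over B in n variables: a finitely additive probability
    measure on L_x(B), presented as a function on representing formulas
    which is invariant under T-equivalence. *)
Definition isKM (B : U -> Prop) (n : nat) (mu : formula -> R) : Prop :=
  (forall p q, LF B n p -> LF B n q -> fequiv p q -> mu p = mu q) /\
  (forall p, LF B n p -> 0 <= mu p) /\
  mu fTrue = 1 /\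
  (forall p q, LF B n p -> LF B n q -> (forall a, ~ (sat a p /\ sat a q)) ->
     mu (fOr p q) = mu p + mu q).

(** Smallness relative to a cardinal kappa, represented by a type K:
    |A| < |K|. *)
Definition small (K : Type) (A : U -> Prop) : Prop :=
  (exists f : {x | A x} -> K, forall u v, f u = f v -> u = v) /\
  ~ (exists g : K -> {x | A x}, forall u v, g u = g v -> u = v).

Definition saturated (K : Type) : Prop :=
  forall A, small K A ->
  forall P : formula -> Prop,
    (forall p, P p -> LF A 1 p) ->
    (forall l : list formula, (forall p, In p l -> P p) ->
       exists b : U, forall p, In p l -> sat (fun _ => b) p) ->
    exists b : U, forall p, P p -> sat (fun _ => b) p.

Definition automorphism (s : U -> U) : Prop :=
  (forall x y, s x = s y -> x = y) /\ (forall y, exists x, s x = y) /\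
  (forall f args, s (funI U f args) = funI U f (fun j => s (args j))) /\
  (forall r args, relI U r args <-> relI U r (fun j => s (args j))).

Definition homogeneous (K : Type) : Prop :=
  forall (A : U -> Prop) (g : U -> U), small K A ->
    (forall p, fbound 0 p -> fparams A p ->
       forall e, sat e p <-> sat e (fmap g p)) ->
    exists s, automorphism s /\ forall x, A x -> s x = g x.

(** kappa > |T| = |L| + aleph_0 *)
Definition big (K : Type) : Prop :=
  (exists f : (nat + funcs L + rels L)%type -> K, forall u v, f u = f v -> u = v) /\
  ~ (exists g : K -> (nat + funcs L + rels L)%type, forall u v, g u = g v -> u = v).

Definition monster (K : Type) : Prop :=
  big K /\ saturated K /\ homogeneous K.

(** mu >=_{E,A} nu, with mu in the variables x = (0..n-1) and nu written in
    the disjoint tuple y = (n..n+m-1) (nu's own variables 0..m-1 are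
    shifted by n). *)
Definition geE_at (A : U -> Prop) (n m : nat) (mu nu : formula -> R) : Prop :=
  exists lam : formula -> R,
    isKM A (n + m) lam /\
    (forall p, LF A n p -> lam p = mu p) /\
    forall om : formula -> R,
      isKM allU (n + m) om ->
      (forall p, LF A (n + m) p -> om p = lam p) ->
      (forall p, LF allU n p -> om p = mu p) ->
      (forall q, LF allU m q -> om (flift 0 n q) = nu q). (* pi_y(om) = nu *)

Definition geE (K : Type) (n m : nat) (mu nu : formula -> R) : Prop :=
  exists A : U -> Prop, small K A /\ geE_at A n m mu nu.

End FOL.

(* Main.v *)
Require Import Defs.
From Stdlib Require Import Reals Lra Lia Arith List Classical ClassicalEpsilon FunctionalExtensionality PropExtensionality ProofIrrelevance.
From Stdlib Require Fin.

Set Implicit Arguments.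
Local Open Scope nat_scope.


Section Syn.
Context {L : signature} (U : structure L).

Definition upr (f : nat -> nat) : nat -> nat :=
  fun i => match i with 0 => 0 | S i => S (f i) end.

Fixpoint trename (f : nat -> nat) (t : term U) : term U :=
  match t with
  | tvar _ i => tvar U (f i)
  | tpar _ c => tpar U c
  | tapp f0 args => tapp f0 (fun j => trename f (args j))
  end.

Fixpoint frename (f : nat -> nat) (p : formula U) : formula U :=
  match p with
  | fFalse _ => fFalse U
  | fEq t1 t2 => fEq (trename f t1) (trename f t2)
  | fRel r args => fRel r (fun j => trename f (args j))
  | fNeg q => fNeg (frename f q)
  | fAnd q1 q2 => fAnd (frename f q1) (frename f q2)
  | fEx q => fEx (frename (upr f) q)
  end.

Lemma teval_rename : forall f (a : nat -> U) t,
  teval a (trename f t) = teval (fun i => a (f i)) t.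
Proof.
  intros f a t; induction t; simpl; auto.
  f_equal; apply functional_extensionality; intro j; auto.
Qed.

Lemma scons_upr : forall (a : nat -> U) m f,
  (fun i => scons U m a (upr f i)) = scons U m (fun i => a (f i)).
Proof. intros; apply functional_extensionality; intros [|i]; reflexivity. Qed.

Lemma sat_rename : forall p f (a : nat -> U),
  sat a (frename f p) <-> sat (fun i => a (f i)) p.
Proof.
  induction p; intros f a; simpl.
  - tauto.
  - rewrite !teval_rename; tauto.
  - replace (fun j => teval a (trename f (t j))) with (fun j => teval (fun i => a (f i)) (t j)).
    tauto. apply functional_extensionality; intro; rewrite teval_rename; auto.
  - rewrite IHp; tauto.
  - rewrite IHp1, IHp2; tauto.
  - split; intros [m Hm]; exists m.
    + rewrite IHp in Hm. rewrite scons_upr in Hm; auto.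
    + rewrite IHp, scons_upr; auto.
Qed.

Definition shf (c k : nat) : nat -> nat := fun i => if Nat.ltb i c then i else i + k.

Lemma teval_lift : forall c k (a : nat -> U) t,
  teval a (tlift c k t) = teval (fun i => a (shf c k i)) t.
Proof.
  intros c k a t; induction t; simpl; auto.
  f_equal; apply functional_extensionality; intro j; auto.
Qed.

Lemma scons_shf : forall (a : nat -> U) m c k,
  (fun i => scons U m a (shf (S c) k i)) = scons U m (fun i => a (shf c k i)).
Proof.
  intros; apply functional_extensionality; intros [|i]; unfold shf; auto.
  change (S i <? S c) with (i <? c). destruct (i <? c) eqn:E; cbn -[Nat.ltb]; rewrite ?E; reflexivity.
Qed.

Lemma sat_lift : forall p c k (a : nat -> U),
  sat a (flift c k p) <-> sat (fun i => a (shf c k i)) p.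
Proof.
  induction p; intros c k a; simpl.
  - tauto.
  - rewrite !teval_lift; tauto.
  - replace (fun j => teval a (tlift c k (t j))) with (fun j => teval (fun i => a (shf c k i)) (t j)).
    tauto. apply functional_extensionality; intro; rewrite teval_lift; auto.
  - rewrite IHp; tauto.
  - rewrite IHp1, IHp2; tauto.
  - split; intros [m Hm]; exists m.
    + rewrite IHp in Hm. rewrite scons_shf in Hm; auto.
    + rewrite IHp, scons_shf; auto.
Qed.

Lemma teval_ext : forall N t (a b : nat -> U), tbound N t -> (forall i, (i < N)%nat -> a i = b i) ->
  teval a t = teval b t.
Proof.
  intros N t; induction t; intros a b Hb Hab; simpl in *; auto.
  f_equal; apply functional_extensionality; intro j; eauto.
Qed.

Lemma sat_ext : forall p N (a b : nat -> U), fbound N p -> (forall i, (i < N)%nat -> a i = b i) ->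
  (sat a p <-> sat b p).
Proof.
  induction p; intros N a b Hb Hab; simpl in *.
  - tauto.
  - destruct Hb as [H1 H2]; rewrite (teval_ext _ _ _ H1 Hab), (teval_ext _ _ _ H2 Hab); tauto.
  - replace (fun j => teval a (t j)) with (fun j => teval b (t j)). tauto.
    apply functional_extensionality; intro j; symmetry; eapply teval_ext; eauto.
  - rewrite (IHp N a b); tauto.
  - destruct Hb; rewrite (IHp1 N a b), (IHp2 N a b); tauto.
  - split; intros [m Hm]; exists m.
    + eapply (IHp (S N)); [eauto| |exact Hm]. intros [|i] Hi; simpl; auto; symmetry; apply Hab; lia.
    + eapply (IHp (S N)); [eauto| |exact Hm]. intros [|i] Hi; simpl; auto; apply Hab; lia.
Qed.

Lemma tbound_rename : forall t f M N, (forall i, (i < M)%nat -> (f i < N)%nat) -> tbound M t -> tbound N (trename f t).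
Proof. intros t; induction t; intros g M N Hf Hb; simpl in *; eauto. Qed.

Lemma fbound_rename : forall p f M N, (forall i, (i < M)%nat -> (f i < N)%nat) -> fbound M p -> fbound N (frename f p).
Proof.
  induction p; intros f M N Hf Hb; simpl in *; eauto.
  - destruct Hb; split; eapply tbound_rename; eauto.
  - intro j; eapply tbound_rename; eauto.
  - destruct Hb; split; eauto.
  - eapply IHp; [|exact Hb]. intros [|i] Hi; simpl; [lia|]. specialize (Hf i); lia.
Qed.

Lemma tparams_rename : forall P t f, tparams P t -> tparams P (trename f t).
Proof. intros P t; induction t; simpl; auto. Qed.

Lemma fparams_rename : forall P p f, fparams P p -> fparams P (frename f p).
Proof.
  intros P p; induction p; intros f H; simpl in *; auto.
  - destruct H; split; apply tparams_rename; auto.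
  - intro; apply tparams_rename; auto.
  - destruct H; split; auto.
Qed.

Lemma tparams_lift : forall (P : U -> Prop) (t : term U) c k, tparams P t -> tparams P (tlift c k t).
Proof. intros P t; induction t; simpl; auto. Qed.

Lemma fparams_lift : forall (P : U -> Prop) (p : formula U) c k, fparams P p -> fparams P (flift c k p).
Proof.
  intros P p; induction p; intros c k H; simpl in *; auto.
  - destruct H; split; apply tparams_lift; auto.
  - intro; apply tparams_lift; auto.
  - destruct H; split; auto.
Qed.

Lemma tbound_lift : forall (t : term U) c k N, tbound N t -> tbound (N + k) (tlift c k t).
Proof.
  intros t c k; induction t; intros N Hb; simpl in *; auto.
  destruct (Nat.ltb_spec n c); lia.
Qed.

Lemma fbound_lift : forall (p : formula U) c k N, fbound N p -> fbound (N + k) (flift c k p).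
Proof.
  induction p; intros c k N H; simpl in *; auto.
  - destruct H; split; apply tbound_lift; auto.
  - intro; apply tbound_lift; auto.
  - destruct H; split; auto.
  - apply (IHp (S c) k (S N)); auto.
Qed.

Lemma tbound_mono : forall (t : term U) N M, tbound N t -> (N <= M)%nat -> tbound M t.
Proof. intros t; induction t; simpl; intros; eauto; lia. Qed.

Lemma fbound_mono : forall (p : formula U) N M, fbound N p -> (N <= M)%nat -> fbound M p.
Proof.
  induction p; simpl; intros N M H Hle; eauto.
  - destruct H; split; eapply tbound_mono; eauto.
  - intro; eapply tbound_mono; eauto.
  - destruct H; split; eauto.
  - eapply IHp; eauto; lia.
Qed.

Fixpoint fExN (m : nat) (p : formula U) : formula U :=
  match m with 0 => p | S m => fExN m (fEx p) end.

Definition app (m : nat) (b a : nat -> U) : nat -> U :=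
  fun i => if Nat.ltb i m then b i else a (i - m)%nat.

Lemma app_S : forall m (b a : nat -> U) c,
  scons U c (app m b a) = app (S m) (scons U c b) a.
Proof.
  intros; apply functional_extensionality; intros [|i]; unfold app; simpl; auto.
  all: destruct (Nat.ltb i m); auto.
Qed.

Lemma app_S' : forall m (b a : nat -> U),
  app (S m) b a = scons U (b 0%nat) (app m (fun j => b (S j)) a).
Proof.
  intros; apply functional_extensionality; intros [|i]; unfold app; simpl; auto.
  all: destruct (Nat.ltb i m); auto.
Qed.

Lemma sat_fExN : forall m p (a : nat -> U),
  sat a (fExN m p) <-> exists b, sat (app m b a) p.
Proof.
  induction m; intros p a; simpl.
  - split.
    + intro H; exists a. replace (app 0 a a) with a; auto.
      apply functional_extensionality; intro i; unfold app; simpl. f_equal; lia.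
    + intros [b Hb]. replace (app 0 b a) with a in Hb; auto.
      apply functional_extensionality; intro i; unfold app; simpl. f_equal; lia.
  - rewrite IHm. simpl. split.
    + intros [b [c Hc]]. exists (scons U c b). rewrite <- app_S; auto.
    + intros [b Hb]. exists (fun j => b (S j)), (b 0%nat). rewrite <- app_S'. auto.
Qed.

Lemma fbound_fExN : forall m p N, fbound (m + N) p -> fbound N (fExN m p).
Proof.
  induction m; intros p N H; simpl in *; auto.
Qed.

Lemma fparams_fExN : forall P m p, fparams P p -> fparams P (fExN m p).
Proof. intros P m; induction m; intros p H; simpl; auto. Qed.

Definition blk (n m : nat) : nat -> nat :=
  fun i => if Nat.ltb i n then (m + i)%nat else if Nat.ltb i (n + m) then (i - n)%nat else (m + i)%nat.

Definition fAllB (n m : nat) (p : formula U) : formula U :=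
  fNeg (fExN m (fNeg (frename (blk n m) p))).

Definition upd (n m : nat) (a b : nat -> U) : nat -> U :=
  fun i => if Nat.ltb i n then a i else if Nat.ltb i (n + m) then b (i - n)%nat else a i.

Lemma sat_fAllB : forall n m p (a : nat -> U),
  sat a (fAllB n m p) <-> forall b, sat (upd n m a b) p.
Proof.
  intros n m p a. unfold fAllB. simpl. rewrite sat_fExN.
  assert (E : forall b, (fun i => app m b a (blk n m i)) = upd n m a b).
  { intro b; apply functional_extensionality; intro i; unfold app, blk, upd.
    destruct (Nat.ltb_spec i n).
    - destruct (Nat.ltb_spec (m + i) m); [lia|]. f_equal; lia.
    - destruct (Nat.ltb_spec i (n + m)).
      + destruct (Nat.ltb_spec (i - n) m); [auto|lia].
      + destruct (Nat.ltb_spec (m + i) m); [lia|]. f_equal; lia. }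
  split.
  - intros H b. apply NNPP; intro Hn. apply H. exists b. simpl. rewrite sat_rename, E. auto.
  - intros H [b Hb]. simpl in Hb. rewrite sat_rename, E in Hb. auto.
Qed.

Lemma fbound_fAllB : forall n m p N, fbound N p -> fbound N (fAllB n m p).
Proof.
  intros n m p N H. unfold fAllB. simpl. apply fbound_fExN. simpl.
  eapply fbound_rename; [|exact H]. intros i Hi. unfold blk.
  destruct (Nat.ltb_spec i n); [lia|]. destruct (Nat.ltb_spec i (n+m)); lia.
Qed.

Lemma fparams_fAllB : forall P n m p, fparams P p -> fparams P (fAllB n m p).
Proof.
  intros. unfold fAllB. simpl. apply fparams_fExN. simpl. apply fparams_rename; auto.
Qed.

End Syn.

Local Open Scope R_scope.

Section Meas.
Context {L : signature} (U : structure L).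

Definition ind (p : formula U) (a : nat -> U) : R :=
  if excluded_middle_informative (sat a p) then 1 else 0.

Lemma ind_T : forall p a, sat a p -> ind p a = 1.
Proof. intros; unfold ind; destruct excluded_middle_informative; tauto. Qed.
Lemma ind_F : forall p a, ~ sat a p -> ind p a = 0.
Proof. intros; unfold ind; destruct excluded_middle_informative; tauto. Qed.

Definition sumf (l : list (R * formula U)) (a : nat -> U) : R :=
  fold_right (fun x acc => fst x * ind (snd x) a + acc) 0 l.
Definition sumM (m : formula U -> R) (l : list (R * formula U)) : R :=
  fold_right (fun x acc => fst x * m (snd x) + acc) 0 l.

Lemma sumf_app : forall l l' a, sumf (l ++ l') a = sumf l a + sumf l' a.
Proof. induction l; intros; simpl; [lra|]. rewrite IHl; lra. Qed.
Lemma sumM_app : forall m l l', sumM m (l ++ l') = sumM m l + sumM m l'.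
Proof. induction l; intros; simpl; [lra|]. rewrite IHl; lra. Qed.

Definition negl (l : list (R * formula U)) := map (fun x => (- fst x, snd x)) l.
Lemma sumf_neg : forall l a, sumf (negl l) a = - sumf l a.
Proof. induction l; intros; simpl; [lra|]. rewrite IHl; lra. Qed.
Lemma sumM_neg : forall m l, sumM m (negl l) = - sumM m l.
Proof. induction l; intros; simpl; [lra|]. rewrite IHl; lra. Qed.

Definition scl (r : R) (l : list (R * formula U)) := map (fun x => (r * fst x, snd x)) l.
Lemma sumf_scl : forall r l a, sumf (scl r l) a = r * sumf l a.
Proof. induction l; intros; simpl; [lra|]. rewrite IHl; lra. Qed.
Lemma sumM_scl : forall m r l, sumM m (scl r l) = r * sumM m l.
Proof. induction l; intros; simpl; [lra|]. rewrite IHl; lra. Qed.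

Lemma In_negl : forall (P : formula U -> Prop) (l : list (R * formula U)), (forall x, In x l -> P (snd x)) -> forall x, In x (negl l) -> P (snd x).
Proof. intros P l H x Hx; unfold negl in Hx; apply in_map_iff in Hx; destruct Hx as [y [<- Hy]]; simpl; auto. Qed.
Lemma In_scl : forall (P : formula U -> Prop) r (l : list (R * formula U)), (forall x, In x l -> P (snd x)) -> forall x, In x (scl r l) -> P (snd x).
Proof. intros P r l H x Hx; unfold scl in Hx; apply in_map_iff in Hx; destruct Hx as [y [<- Hy]]; simpl; auto. Qed.
Lemma In_app2 : forall (P : formula U -> Prop) (l l' : list (R * formula U)), (forall x, In x l -> P (snd x)) -> (forall x, In x l' -> P (snd x)) -> forall x, In x (l ++ l') -> P (snd x).
Proof. intros P l l' H H' x Hx; apply in_app_or in Hx; destruct Hx; auto. Qed.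

Definition isKMD (D : formula U -> Prop) (m : formula U -> R) : Prop :=
  (forall p q, D p -> D q -> fequiv p q -> m p = m q) /\
  (forall p, D p -> 0 <= m p) /\
  m (fTrue U) = 1 /\
  (forall p q, D p -> D q -> (forall a, ~ (sat a p /\ sat a q)) ->
     m (fOr p q) = m p + m q).

Definition Dalg (D : formula U -> Prop) : Prop :=
  D (fFalse U) /\ (forall p, D p -> D (fNeg p)) /\ (forall p q, D p -> D q -> D (fAnd p q)).

Lemma sat_fOr : forall (a : nat -> U) p q, sat a (fOr p q) <-> sat a p \/ sat a q.
Proof. intros; unfold fOr; simpl; tauto. Qed.
Lemma sat_fTrue : forall (a : nat -> U), sat a (fTrue U).
Proof. intros; unfold fTrue; simpl; tauto. Qed.

Section KM.
Variables (D : formula U -> Prop) (m : formula U -> R).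
Hypothesis HD : Dalg D.
Hypothesis Hm : isKMD D m.

Lemma D_neg : forall p, D p -> D (fNeg p). Proof. apply HD. Qed.
Lemma D_and : forall p q, D p -> D q -> D (fAnd p q). Proof. apply HD. Qed.
Lemma D_false : D (fFalse U). Proof. apply HD. Qed.
Lemma D_true : D (fTrue U). Proof. apply D_neg, D_false. Qed.
Lemma D_or : forall p q, D p -> D q -> D (fOr p q).
Proof. intros; unfold fOr; apply D_neg, D_and; apply D_neg; auto. Qed.

Lemma m_inv : forall p q, D p -> D q -> fequiv p q -> m p = m q. Proof. apply Hm. Qed.
Lemma m_pos : forall p, D p -> 0 <= m p. Proof. apply Hm. Qed.
Lemma m_true : m (fTrue U) = 1. Proof. apply Hm. Qed.
Lemma m_add : forall p q, D p -> D q -> (forall a, ~ (sat a p /\ sat a q)) -> m (fOr p q) = m p + m q.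
Proof. apply Hm. Qed.

Lemma m_false : m (fFalse U) = 0.
Proof.
  assert (H := m_add D_false D_false (fun a H => proj1 H)).
  rewrite (@m_inv (fOr (fFalse U) (fFalse U)) (fFalse U)) in H.
  lra. apply D_or; apply D_false. apply D_false.
  intro a; rewrite sat_fOr; simpl; tauto.
Qed.

Lemma m_empty : forall e, D e -> (forall a, ~ sat a e) -> m e = 0.
Proof.
  intros e He H. rewrite (@m_inv e (fFalse U)); auto using D_false, m_false.
  intro a; simpl; specialize (H a); tauto.
Qed.

Lemma m_split : forall e p, D e -> D p -> m e = m (fAnd e p) + m (fAnd e (fNeg p)).
Proof.
  intros e p He Hp. rewrite <- m_add; auto using D_and, D_neg.
  - apply m_inv; auto using D_or, D_and, D_neg.
    intro a; rewrite sat_fOr; simpl; tauto.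
  - intros a; simpl; tauto.
Qed.

Lemma m_nonneg_compl : forall p, D p -> m (fNeg p) = 1 - m p.
Proof.
  intros p Hp. assert (H := @m_split (fTrue U) p D_true Hp). rewrite m_true in H.
  rewrite (@m_inv (fAnd (fTrue U) p) p), (@m_inv (fAnd (fTrue U) (fNeg p)) (fNeg p)) in H;
    auto using D_and, D_neg, D_true; try lra; intro a; simpl; unfold fTrue; simpl; tauto.
Qed.

Definition sumMr (l : list (R * formula U)) (e : formula U) : R :=
  fold_right (fun x acc => fst x * m (fAnd (snd x) e) + acc) 0 l.

Lemma sumMr_split : forall l e p, D e -> D p -> (forall x, In x l -> D (snd x)) ->
  sumMr l e = sumMr l (fAnd e p) + sumMr l (fAnd e (fNeg p)).
Proof.
  induction l as [|[al ph] l IH]; intros e p He Hp Hl; simpl; [lra|].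
  rewrite (IH e p); auto. 2: intros; apply Hl; simpl; auto.
  assert (Hph : D ph) by (apply (Hl (al, ph)); simpl; auto).
  rewrite (@m_split (fAnd ph e) p); auto using D_and.
  rewrite (@m_inv (fAnd (fAnd ph e) p) (fAnd ph (fAnd e p))),
          (@m_inv (fAnd (fAnd ph e) (fNeg p)) (fAnd ph (fAnd e (fNeg p))));
    auto using D_and, D_neg; try lra; intro a; simpl; tauto.
Qed.

Lemma cover_rel : forall l e s, D e -> (forall x, In x l -> D (snd x)) ->
  (forall a, sat a e -> s <= sumf l a) -> s * m e <= sumMr l e.
Proof.
  induction l as [|[al ph] l IH]; intros e s He Hl H; simpl in *.
  - destruct (classic (exists a, sat a e)) as [[a Ha]|Hn].
    + specialize (H a Ha). assert (0 <= m e) by (apply m_pos; auto). nra.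
    + rewrite m_empty; auto. lra. intros a Ha; apply Hn; eauto.
  - assert (Hph : D ph) by (apply (Hl (al, ph)); auto).
    assert (Hl' : forall x, In x l -> D (snd x)) by auto.
    assert (IH1 := IH (fAnd e ph) (s - al) (D_and He Hph) Hl').
    assert (IH2 := IH (fAnd e (fNeg ph)) s (D_and He (D_neg Hph)) Hl').
    assert (H1 : (s - al) * m (fAnd e ph) <= sumMr l (fAnd e ph)).
    { apply IH1. intros a [Ha Hb]. specialize (H a Ha). rewrite ind_T in H; auto. lra. }
    assert (H2 : s * m (fAnd e (fNeg ph)) <= sumMr l (fAnd e (fNeg ph))).
    { apply IH2. intros a [Ha Hb]. specialize (H a Ha). rewrite ind_F in H; auto. lra. }
    rewrite (@sumMr_split l e ph); auto.
    rewrite (@m_split e ph); auto.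
    rewrite (@m_inv (fAnd ph e) (fAnd e ph)); auto using D_and.
    nra. intro a; simpl; tauto.
Qed.

Lemma sumMr_true : forall l, (forall x, In x l -> D (snd x)) -> sumMr l (fTrue U) = sumM m l.
Proof.
  induction l as [|[al ph] l IH]; intros Hl; simpl; auto.
  assert (Hph : D ph) by (apply (Hl (al,ph)); simpl; auto).
  rewrite IH by (intros; apply Hl; simpl; auto).
  rewrite (@m_inv (fAnd ph (fTrue U)) ph); auto using D_and, D_true.
  intro a; simpl; unfold fTrue; simpl; tauto.
Qed.

Lemma cover : forall l s, (forall x, In x l -> D (snd x)) ->
  (forall a, s <= sumf l a) -> s <= sumM m l.
Proof.
  intros l s Hl H. rewrite <- sumMr_true; auto.
  assert (Hc := @cover_rel l (fTrue U) s D_true Hl (fun a _ => H a)).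
  rewrite m_true in Hc. lra.
Qed.

End KM.

End Meas.

Unset Implicit Arguments.
From mathcomp Require classical_sets boolp.
Set Bullet Behavior "Strict Subproofs".
Local Open Scope R_scope.

Lemma asb : forall P : Prop, boolp.asbool P = true <-> P.
Proof. intro P. destruct (boolp.asboolP P); split; intros; auto; discriminate. Qed.
Lemma asb1 : forall P : Prop, boolp.asbool P = true -> P. Proof. intros P; apply asb. Qed.
Lemma asb2 : forall P : Prop, P -> boolp.asbool P = true. Proof. intros P; apply asb. Qed.

Lemma ZLP : forall (T : Type) (t0 : T) (Rl : T -> T -> Prop),
  (forall t, Rl t t) -> (forall r s t, Rl r s -> Rl s t -> Rl r t) ->
  (forall A : T -> Prop, (forall s t, A s -> A t -> Rl s t \/ Rl t s) -> exists t, forall s, A s -> Rl s t) ->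
  exists t, forall s, Rl t s -> Rl s t.
Proof.
  intros T t0 Rl Hr Ht Hc.
  destruct (@classical_sets.ZL_preorder T t0 (fun x y => boolp.asbool (Rl x y))) as [t Ht0].
  - intro t. apply asb2; auto.
  - intros r s t H1 H2. apply asb2. apply asb1 in H1. apply asb1 in H2. exact (Ht _ _ _ H1 H2).
  - intros A HA. destruct (Hc A) as [t Hat].
    + intros s t Hs Htt. destruct (HA s t Hs Htt) as [H|H]; [left|right]; apply asb1; auto.
    + exists t. intros s Hs. apply asb2. auto.
  - exists t. intros s Hs. apply asb1. apply Ht0. apply asb2. auto.
Qed.

Section HB.
Variable X : Type.
Variable Dc : (X -> R) -> R -> Prop.

Definition bnd (g : X -> R) := exists M, forall x, Rabs (g x) <= M.

Hypothesis HC1 : forall g t g' t', Dc g t -> Dc g' t' -> Dc (fun x => g x + g' x) (t + t').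
Hypothesis HC2 : forall g t r, Dc g t -> 0 < r -> Dc (fun x => r * g x) (r * t).
Hypothesis HC3 : forall g, bnd g -> exists t, Dc g t.
Hypothesis HC4 : forall t, Dc (fun _ => 0) t -> 0 <= t.

Definition good (W : (X -> R) -> Prop) (Lf : (X -> R) -> R) : Prop :=
  (forall g, W g -> bnd g) /\ W (fun _ => 0) /\
  (forall g h, W g -> W h -> W (fun x => g x + h x)) /\
  (forall r g, W g -> W (fun x => r * g x)) /\
  (forall g h, W g -> W h -> Lf (fun x => g x + h x) = Lf g + Lf h) /\
  (forall r g, W g -> Lf (fun x => r * g x) = r * Lf g) /\
  (forall g t, W g -> Dc g t -> Lf g <= t).

Record PF := { pW : (X -> R) -> Prop; pL : (X -> R) -> R; pgood : good pW pL }.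

Definition Rl (s t : PF) : Prop :=
  (forall g, pW s g -> pW t g) /\ (forall g, pW s g -> pL t g = pL s g).

Lemma bnd0 : bnd (fun _ => 0).
Proof. exists 0; intro; rewrite Rabs_R0; lra. Qed.

Lemma good0 : good (fun g => g = (fun _ => 0)) (fun _ => 0).
Proof.
  repeat split; intros; subst; auto using bnd0; try lra.
  all: try (apply functional_extensionality; intro; lra); try (apply HC4; auto).
Qed.

Definition t0 : PF := Build_PF _ _ good0.

Section Chain.
Variable A : PF -> Prop.
Hypothesis Htot : forall s t, A s -> A t -> Rl s t \/ Rl t s.
Variable s0 : PF.
Hypothesis Hs0 : A s0.

Definition cW (g : X -> R) : Prop := exists s, A s /\ pW s g.
Definition cL (g : X -> R) : R :=
  match excluded_middle_informative (exists s, A s /\ pW s g) with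
  | left H => pL (proj1_sig (constructive_indefinite_description _ H)) g
  | right _ => 0
  end.

Lemma cL_eq : forall s g, A s -> pW s g -> cL g = pL s g.
Proof.
  intros s g Hs Hg. unfold cL. destruct excluded_middle_informative as [H|H].
  - destruct (constructive_indefinite_description _ H) as [s' [Hs' Hg']]. simpl.
    destruct (Htot _ _ Hs Hs') as [[_ E]|[_ E]]; rewrite E; auto.
  - exfalso; eauto.
Qed.

Lemma two : forall g h, cW g -> cW h -> exists u, A u /\ pW u g /\ pW u h.
Proof.
  intros g h [s [Hs Hg]] [s' [Hs' Hh]].
  destruct (Htot _ _ Hs Hs') as [[E _]|[E _]].
  - exists s'; auto.
  - exists s; auto.
Qed.

Lemma cgood : good cW cL.
Proof.
  repeat split.
  - intros g [s [Hs Hg]]. apply (pgood s); auto.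
  - exists s0; split; auto. apply (pgood s0).
  - intros g h Hg Hh. destruct (two _ _ Hg Hh) as [u [Hu [H1 H2]]]. exists u; split; auto. apply (pgood u); auto.
  - intros r g [s [Hs Hg]]. exists s; split; auto. apply (pgood s); auto.
  - intros g h Hg Hh. destruct (two _ _ Hg Hh) as [u [Hu [H1 H2]]].
    assert (H3 : pW u (fun x => g x + h x)) by (apply (pgood u); auto).
    rewrite (@cL_eq u g Hu H1), (@cL_eq u h Hu H2), (@cL_eq u _ Hu H3). apply (pgood u); auto.
  - intros r g [s [Hs Hg]].
    assert (H3 : pW s (fun x => r * g x)) by (apply (pgood s); auto).
    rewrite (@cL_eq s g Hs Hg), (@cL_eq s _ Hs H3). apply (pgood s); auto.
  - intros g t [s [Hs Hg]] HD. rewrite (@cL_eq s g Hs Hg). apply (pgood s); auto.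
Qed.

Lemma chain_ub : exists t, forall s, A s -> Rl s t.
Proof.
  exists (Build_PF _ _ cgood). intros s Hs. split; simpl.
  - intros g Hg; exists s; auto.
  - intros g Hg; apply cL_eq; auto.
Qed.
End Chain.

Section Step.
Variable t : PF.
Variable v : X -> R.
Hypothesis Hv : bnd v.
Hypothesis Hnv : ~ pW t v.

Let W := pW t.
Let Lt := pL t.
Let gt := pgood t.

Lemma W0 : W (fun _ => 0). Proof. apply gt. Qed.
Lemma Wadd : forall g h, W g -> W h -> W (fun x => g x + h x). Proof. apply gt. Qed.
Lemma Wscal : forall r g, W g -> W (fun x => r * g x). Proof. apply gt. Qed.
Lemma Ladd : forall g h, W g -> W h -> Lt (fun x => g x + h x) = Lt g + Lt h. Proof. apply gt. Qed.
Lemma Lscal : forall r g, W g -> Lt (fun x => r * g x) = r * Lt g. Proof. apply gt. Qed.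
Lemma Ldom : forall g s, W g -> Dc g s -> Lt g <= s. Proof. apply gt. Qed.
Lemma Wbnd : forall g, W g -> bnd g. Proof. apply gt. Qed.

Definition Lo (y : R) : Prop := exists w s, W w /\ Dc (fun x => w x - v x) s /\ y = Lt w - s.
Definition Up (y : R) : Prop := exists w s, W w /\ Dc (fun x => w x + v x) s /\ y = s - Lt w.

Lemma bnd_lin : forall w r, bnd w -> bnd (fun x => w x + r * v x).
Proof.
  intros w r [M1 H1]. destruct Hv as [M2 H2]. exists (M1 + Rabs r * M2). intro x.
  eapply Rle_trans; [apply Rabs_triang|]. rewrite Rabs_mult.
  apply Rplus_le_compat; auto. apply Rmult_le_compat_l; auto. apply Rabs_pos.
Qed.

Lemma Lo_Up : forall a b, Lo a -> Up b -> a <= b.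
Proof.
  intros a b [w' [s' [Hw' [HD' ->]]]] [w [s [Hw [HD ->]]]].
  assert (HD2 := HC1 _ _ _ _ HD' HD). cbv beta in HD2.
  replace (fun x => w' x - v x + (w x + v x)) with (fun x => w' x + w x) in HD2
    by (apply functional_extensionality; intro; ring).
  assert (H := Ldom _ _ (Wadd _ _ Hw' Hw) HD2). rewrite Ladd in H; auto. lra.
Qed.

Lemma Lo_ne : exists a, Lo a.
Proof.
  destruct (HC3 (fun x => 0 - v x)) as [s Hs].
  - replace (fun x => 0 - v x) with (fun x => 0 + (-1) * v x) by (apply functional_extensionality; intro; ring).
    apply bnd_lin, bnd0.
  - exists (Lt (fun _ => 0) - s), (fun _ => 0), s. split; auto using W0.
Qed.

Lemma Up_ne : exists b, Up b.
Proof.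
  destruct (HC3 (fun x => 0 + v x)) as [s Hs].
  - replace (fun x => 0 + v x) with (fun x => 0 + 1 * v x) by (apply functional_extensionality; intro; ring).
    apply bnd_lin, bnd0.
  - exists (s - Lt (fun _ => 0)), (fun _ => 0), s. split; auto using W0.
Qed.

Lemma c_ex : {c | (forall a, Lo a -> a <= c) /\ (forall b, Up b -> c <= b)}.
Proof.
  destruct (completeness Lo) as [c [Hub Hlub]].
  - destruct Up_ne as [b Hb]. exists b. intros a Ha. apply Lo_Up; auto.
  - apply Lo_ne.
  - exists c. split; auto. intros b Hb. apply Hlub. intros a Ha. apply Lo_Up; auto.
Qed.

Definition c := proj1_sig c_ex.
Lemma c_lo : forall a, Lo a -> a <= c. Proof. apply (proj2_sig c_ex). Qed.
Lemma c_up : forall b, Up b -> c <= b. Proof. apply (proj2_sig c_ex). Qed.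

Definition W' (g : X -> R) : Prop := exists w r, W w /\ g = (fun x => w x + r * v x).
Definition L' (g : X -> R) : R :=
  match excluded_middle_informative (exists p : (X -> R) * R, W (fst p) /\ g = (fun x => fst p x + snd p * v x)) with
  | left H => let p := proj1_sig (constructive_indefinite_description _ H) in Lt (fst p) + snd p * c
  | right _ => 0
  end.

Lemma uniq : forall w1 r1 w2 r2, W w1 -> W w2 ->
  (fun x => w1 x + r1 * v x) = (fun x => w2 x + r2 * v x) -> r1 = r2 /\ w1 = w2.
Proof.
  intros w1 r1 w2 r2 H1 H2 E.
  assert (Ex : forall x, w1 x + r1 * v x = w2 x + r2 * v x) by (intro x; apply (f_equal (fun f => f x) E)).
  destruct (Req_dec r1 r2) as [<-|Hne].
  - split; auto. apply functional_extensionality; intro x; specialize (Ex x); lra.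
  - exfalso. apply Hnv.
    replace v with (fun x => / (r2 - r1) * (w1 x + (-1) * w2 x)).
    + apply Wscal, Wadd; auto. apply Wscal; auto.
    + apply functional_extensionality; intro x. specialize (Ex x).
      assert (r2 - r1 <> 0) by lra. field_simplify; auto. 
      replace (w1 x - w2 x) with ((r2 - r1) * v x) by lra. field; auto.
Qed.

Lemma L'_eq : forall w r, W w -> L' (fun x => w x + r * v x) = Lt w + r * c.
Proof.
  intros w r Hw. unfold L'. destruct excluded_middle_informative as [H|H].
  - destruct (constructive_indefinite_description _ H) as [[w2 r2] [Hw2 E]]. simpl in *.
    destruct (uniq _ _ _ _ Hw Hw2 E) as [-> ->]. auto.
  - exfalso; apply H. exists (w, r); auto.
Qed.

Lemma good' : good W' L'.
Proof.
  repeat split.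
  - intros g [w [r [Hw ->]]]. apply bnd_lin, Wbnd; auto.
  - exists (fun _ => 0), 0. split; auto using W0. apply functional_extensionality; intro; ring.
  - intros g h [w1 [r1 [H1 ->]]] [w2 [r2 [H2 ->]]]. exists (fun x => w1 x + w2 x), (r1 + r2).
    split; auto using Wadd. apply functional_extensionality; intro; ring.
  - intros r g [w1 [r1 [H1 ->]]]. exists (fun x => r * w1 x), (r * r1). split; auto using Wscal.
    apply functional_extensionality; intro; ring.
  - intros g h [w1 [r1 [H1 ->]]] [w2 [r2 [H2 ->]]].
    replace (fun x => w1 x + r1 * v x + (w2 x + r2 * v x)) with (fun x => (fun y => w1 y + w2 y) x + (r1 + r2) * v x)
      by (apply functional_extensionality; intro; ring).
    rewrite !L'_eq, Ladd; auto using Wadd. ring.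
  - intros r g [w1 [r1 [H1 ->]]].
    replace (fun x => r * (w1 x + r1 * v x)) with (fun x => (fun y => r * w1 y) x + (r * r1) * v x)
      by (apply functional_extensionality; intro; ring).
    rewrite !L'_eq, Lscal; auto using Wscal. ring.
  - intros g s [w [r [Hw ->]]] HD. rewrite L'_eq; auto.
    destruct (Rtotal_order r 0) as [Hr|[Hr|Hr]].
    + assert (Hp : 0 < - / r) by (apply Ropp_0_gt_lt_contravar, Rinv_lt_0_compat; auto).
      assert (H := HC2 _ _ _ HD Hp). cbv beta in H.
      replace (fun x => - / r * (w x + r * v x)) with (fun x => (fun y => - / r * w y) x - v x) in H
        by (apply functional_extensionality; intro; field; lra).
      assert (Hl := c_lo (Lt (fun y => - / r * w y) - (- / r * s))).
      rewrite Lscal in Hl; auto.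
      assert (Hl2 : - / r * Lt w - - / r * s <= c).
      { apply Hl. exists (fun y => - / r * w y), (- / r * s). split; auto using Wscal. rewrite Lscal; auto. }
      assert (Hm : (- r) * (- / r * Lt w - - / r * s) <= (- r) * c) by (apply Rmult_le_compat_l; lra).
      replace ((- r) * (- / r * Lt w - - / r * s)) with (Lt w - s) in Hm by (field; lra). lra.
    + subst r. replace (fun x => w x + 0 * v x) with w in HD by (apply functional_extensionality; intro; ring).
      assert (H := Ldom _ _ Hw HD). lra.
    + assert (Hp : 0 < / r) by (apply Rinv_0_lt_compat; auto).
      assert (H := HC2 _ _ _ HD Hp). cbv beta in H.
      replace (fun x => / r * (w x + r * v x)) with (fun x => (fun y => / r * w y) x + v x) in H
        by (apply functional_extensionality; intro; field; lra).
      assert (Hu : c <= / r * s - / r * Lt w).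
      { apply c_up. exists (fun y => / r * w y), (/ r * s). split; auto using Wscal. rewrite Lscal; auto. }
      assert (Hm : r * c <= r * (/ r * s - / r * Lt w)) by (apply Rmult_le_compat_l; lra).
      replace (r * (/ r * s - / r * Lt w)) with (s - Lt w) in Hm by (field; lra). lra.
Qed.

Lemma step_contra : (forall s, Rl t s -> Rl s t) -> False.
Proof.
  intro Hmax. set (t' := Build_PF _ _ good').
  assert (Hr : Rl t t').
  { split; simpl.
    - intros g Hg. exists g, 0. split; auto. apply functional_extensionality; intro; ring.
    - intros g Hg. replace g with (fun x => g x + 0 * v x) at 1 by (apply functional_extensionality; intro; ring).
      rewrite L'_eq; auto. fold Lt. ring. }
  destruct (Hmax t' Hr) as [Hs _]. apply Hnv. apply Hs. simpl.
  exists (fun _ => 0), 1. split; auto using W0. apply functional_extensionality; intro; ring.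
Qed.
End Step.

Theorem HB : exists Lf : (X -> R) -> R,
  (forall g h, bnd g -> bnd h -> Lf (fun x => g x + h x) = Lf g + Lf h) /\
  (forall r g, bnd g -> Lf (fun x => r * g x) = r * Lf g) /\
  (forall g s, bnd g -> Dc g s -> Lf g <= s).
Proof.
  destruct (@ZLP PF t0 Rl) as [t Ht].
  - intro; split; auto.
  - intros r s u [H1 H2] [H3 H4]; split; auto. intros g Hg. rewrite H4; auto.
  - intros A HA. destruct (classic (exists s, A s)) as [[s0 Hs0]|Hn].
    + eapply chain_ub; eauto.
    + exists t0. intros s Hs; exfalso; eauto.
  - assert (HW : forall g, bnd g -> pW t g).
    { intros g Hg. apply NNPP; intro Hn. apply (step_contra t g Hg Hn Ht). }
    exists (pL t). destruct (pgood t) as [_ [_ [_ [_ [H1 [H2 H3]]]]]].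
    repeat split; auto.
Qed.

End HB.


Section AM.
Context {L : signature} (U : structure L).

Fixpoint geform (l : list (R * formula U)) (v : R) : formula U :=
  match l with
  | nil => if Rle_dec v 0 then fTrue U else fFalse U
  | (al, ph) :: l' => fOr (fAnd ph (geform l' (v - al))) (fAnd (fNeg ph) (geform l' v))
  end.

Lemma sat_geform : forall l v a, sat a (geform l v) <-> v <= sumf l a.
Proof.
  induction l as [|[al ph] l IH]; intros v a.
  - simpl. destruct (Rle_dec v 0); simpl; [unfold fTrue; simpl; split; intros; auto; lra|split; intros; [contradiction|lra]].
  - change (sat a (fOr (fAnd ph (geform l (v - al))) (fAnd (fNeg ph) (geform l v))) <-> v <= al * ind ph a + sumf l a).
    rewrite sat_fOr. change (((sat a ph /\ sat a (geform l (v - al))) \/ (~ sat a ph /\ sat a (geform l v))) <-> v <= al * ind ph a + sumf l a).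
    rewrite !IH.
    destruct (classic (sat a ph)) as [H|H].
    + rewrite ind_T; auto. split; [intros [[_ H1]|[H1 _]]; [lra|contradiction]|intro; left; split; auto; lra].
    + rewrite ind_F; auto. split; [intros [[H1 _]|[_ H1]]; [contradiction|lra]|intro; right; split; auto; lra].
Qed.

Lemma D_geform : forall D, Dalg D -> forall l v, (forall x, In x l -> D (snd x)) -> D (geform l v).
Proof.
  intros D HD l; induction l as [|[al ph] l IH]; intros v Hl; simpl.
  - destruct (Rle_dec v 0); [apply D_true|apply D_false]; auto.
  - assert (Hph : D ph) by (apply (Hl (al, ph)); simpl; auto).
    assert (Hl' : forall x, In x l -> D (snd x)) by (intros; apply Hl; simpl; auto).
    apply D_or; auto; apply D_and; auto; apply D_neg; auto.
Qed.

Fixpoint sums (l : list (R * formula U)) : list R :=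
  match l with
  | nil => 0 :: nil
  | (al, ph) :: l' => sums l' ++ map (Rplus al) (sums l')
  end.

Lemma sums_in : forall l a, In (sumf l a) (sums l).
Proof.
  induction l as [|[al ph] l IH]; intros a; simpl; auto.
  apply in_or_app. unfold ind. destruct excluded_middle_informative.
  - right. replace (al * 1 + sumf l a) with (al + sumf l a) by ring. apply in_map; auto.
  - left. replace (al * 0 + sumf l a) with (sumf l a) by ring. auto.
Qed.

Lemma min_ex : forall (V : list R) (P : R -> Prop), (exists x, P x) -> (forall x, P x -> In x V) ->
  exists x, P x /\ forall y, P y -> x <= y.
Proof.
  induction V as [|v V IH]; intros P [x Hx] HV.
  - destruct (HV x Hx).
  - destruct (classic (exists y, P y /\ y <> v)) as [[y [Hy Hyv]]|Hn].
    + destruct (IH (fun z => P z /\ z <> v)) as [m [[Hm1 Hm2] Hm3]].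
      * exists y; auto.
      * intros z [Hz Hzv]. destruct (HV z Hz); auto. congruence.
      * destruct (classic (P v)) as [Hv|Hv].
        -- destruct (Rle_dec v m).
           ++ exists v. split; auto. intros z Hz. destruct (Req_dec z v); [lra|]. 
              assert (m <= z) by (apply Hm3; auto). lra.
           ++ exists m. split; auto. intros z Hz. destruct (Req_dec z v); [subst; lra|]. apply Hm3; auto.
        -- exists m. split; auto. intros z Hz. apply Hm3. split; auto. intro; subst; auto.
    + exists x. split; auto. intros y Hy.
      assert (y = v) by (apply NNPP; intro; apply Hn; eauto).
      assert (x = v) by (apply NNPP; intro; apply Hn; eauto). lra.
Qed.

Lemma sum_nodup : forall (Ef : R -> formula U) (V : list R) a x, NoDup V ->
  (forall v, In v V -> (sat a (Ef v) <-> v = x)) ->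
  sumf (map (fun v => (v, Ef v)) V) a = if in_dec Req_EM_T x V then x else 0.
Proof.
  intros Ef V a x; induction V as [|v V IH]; intros Hnd HE; simpl; auto.
  inversion Hnd; subst.
  rewrite IH; auto. 2: intros; apply HE; simpl; auto.
  destruct (Req_EM_T v x) as [<-|Hne].
  - rewrite ind_T by (apply HE; simpl; auto).
    destruct (in_dec Req_EM_T v V); [contradiction|]. ring.
  - rewrite ind_F by (rewrite HE; simpl; auto).
    destruct (in_dec Req_EM_T x V); ring.
Qed.

Lemma foldD : forall D, Dalg D -> forall (G : R -> formula U) v (V : list R), (forall w, D (G w)) ->
  D (fold_right (fun w acc => if Rlt_dec v w then fAnd (fNeg (G w)) acc else acc) (fTrue U) V).
Proof.
  intros D HD G v V HG. induction V as [|w V IHV]; simpl.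
  - apply D_true; auto.
  - destruct (Rlt_dec v w); auto. apply D_and; auto. apply D_neg; auto.
Qed.

Variables (D1 D2 : formula U -> Prop) (m1 m2 : formula U -> R).
Hypothesis HD1 : Dalg D1.
Hypothesis HD2 : Dalg D2.
Hypothesis Hm1 : isKMD D1 m1.
Hypothesis Hm2 : isKMD D2 m2.
Variable rel : (nat -> U) -> (nat -> U) -> Prop.
Hypothesis Hrefl : forall a, rel a a.
Hypothesis Hinv : forall p, D1 p -> forall a a', rel a a' -> (sat a p <-> sat a' p).
Variable pr : formula U -> formula U.
Hypothesis Hpr : forall q, D2 q -> D1 (pr q) /\ D2 (pr q) /\ (forall a, sat a (pr q) <-> forall a', rel a a' -> sat a' q).
Hypothesis Hagree : forall p, D1 p -> D2 p -> m1 p = m2 p.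

Lemma sumf_inv : forall l a a', (forall x, In x l -> D1 (snd x)) -> rel a a' -> sumf l a = sumf l a'.
Proof.
  induction l as [|[al ph] l IH]; intros a a' Hl Hr; simpl; auto.
  rewrite (IH a a'); auto. 2: intros; apply Hl; simpl; auto.
  assert (Hph : D1 ph) by (apply (Hl (al, ph)); simpl; auto).
  destruct (classic (sat a ph)) as [H|H].
  - rewrite !ind_T; auto. apply (Hinv ph Hph a a' Hr); auto.
  - rewrite !ind_F; auto. rewrite <- (Hinv ph Hph a a' Hr); auto.
Qed.

Lemma sumM_agree : forall l, (forall x, In x l -> D1 (snd x) /\ D2 (snd x)) -> sumM m1 l = sumM m2 l.
Proof.
  induction l as [|[al ph] l IH]; intros Hl; simpl; auto.
  rewrite IH by (intros; apply Hl; simpl; auto).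
  destruct (Hl (al, ph)) as [H1 H2]; simpl; auto. simpl in *. rewrite Hagree; auto.
Qed.

Lemma mixed : forall l1 l2 s, (forall x, In x l1 -> D1 (snd x)) -> (forall x, In x l2 -> D2 (snd x)) ->
  (forall a, s <= sumf l1 a + sumf l2 a) -> s <= sumM m1 l1 + sumM m2 l2.
Proof.
  intros l1 l2 s Hl1 Hl2 H.
  set (V := nodup Req_EM_T (sums l2)).
  set (F := fun w => pr (geform l2 w)).
  assert (HF : forall w, D1 (F w) /\ D2 (F w) /\ (forall a, sat a (F w) <-> forall a', rel a a' -> w <= sumf l2 a')).
  { intro w. destruct (Hpr (geform l2 w)) as [H1 [H2 H3]].
    - apply D_geform; auto.
    - split; [|split]; auto. intro a. unfold F. rewrite H3. 
      split; intros Ha a' Hr; specialize (Ha a' Hr); apply sat_geform; auto. }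
  set (na := fun v => fold_right (fun w acc => if Rlt_dec v w then fAnd (fNeg (F w)) acc else acc) (fTrue U) V).
  assert (Hna : forall v a, sat a (na v) <-> forall w, In w V -> v < w -> ~ sat a (F w)).
  { intros v a. unfold na. clearbody V. induction V as [|w V IHV]; simpl.
    - split; intros; [contradiction|simpl; tauto].
    - destruct (Rlt_dec v w) as [Hvw|Hvw]; simpl; rewrite IHV; split.
      + intros [H1 H2] w' [<-|Hw'] Hlt; auto.
      + intros H1; split; auto.
      + intros H1 w' [<-|Hw'] Hlt; [contradiction|auto].
      + intros H1 w' Hw' Hlt; auto. }
  set (E := fun v => fAnd (F v) (na v)).
  assert (HE : forall v, D1 (E v) /\ D2 (E v)).
  { intro v. assert (forall D, Dalg D -> (forall w, D (F w)) -> D (E v)).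
    { intros D HD HFD. unfold E. apply D_and; auto. unfold na. apply foldD; auto. }
    split; apply H0; auto; intro w; apply HF. }
  set (lk := map (fun v => (v, E v)) V).
  assert (Hlk : forall a, exists vs, sumf lk a = vs /\ (exists a', rel a a' /\ sumf l2 a' = vs) /\ (forall a', rel a a' -> vs <= sumf l2 a')).
  { intro a. destruct (min_ex V (fun v => exists a', rel a a' /\ sumf l2 a' = v)) as [vs [[a' [Ha' Hvs]] Hmin]].
    - exists (sumf l2 a), a; auto.
    - intros x [a' [_ <-]]. unfold V. apply nodup_In. apply sums_in.
    - assert (Hvs_le : forall a'', rel a a'' -> vs <= sumf l2 a'').
      { intros a'' Hr. apply Hmin. eauto. }
      exists vs. split; [|split; eauto].
      assert (HinV : In vs V) by (unfold V; apply nodup_In; subst vs; apply sums_in).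
      unfold lk. rewrite (sum_nodup E V a vs).
      + destruct (in_dec Req_EM_T vs V); [auto|contradiction].
      + unfold V; apply NoDup_nodup.
      + intros v Hv. unfold E. simpl. rewrite Hna. destruct (HF v) as [_ [_ HFv]]. rewrite HFv.
        split.
        * intros [H1 H2]. assert (v <= vs) by (rewrite <- Hvs; apply H1; auto).
          destruct (Rle_lt_or_eq_dec _ _ H0); auto. exfalso. apply (H2 vs HinV r).
          destruct (HF vs) as [_ [_ HFvs]]. rewrite HFvs. auto.
        * intros ->. split; auto. intros w Hw Hlt Hc. destruct (HF w) as [_ [_ HFw]]. rewrite HFw in Hc. specialize (Hc a' Ha'). lra. }
  assert (Hlk1 : forall x, In x lk -> D1 (snd x) /\ D2 (snd x)).
  { intros x Hx. unfold lk in Hx. apply in_map_iff in Hx. destruct Hx as [v [<- _]]. apply HE. }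
  assert (C1 : s <= sumM m1 (l1 ++ lk)).
  { apply (cover HD1 Hm1).
    - apply In_app2; auto. intros; apply Hlk1; auto.
    - intro a. rewrite sumf_app. destruct (Hlk a) as [vs [-> [[a' [Hr Ha']] _]]].
      rewrite (sumf_inv l1 a a'); auto. rewrite <- Ha'. apply H. }
  assert (C2 : 0 <= sumM m2 (l2 ++ negl lk)).
  { apply (cover HD2 Hm2).
    - apply In_app2; auto. apply In_negl. intros; apply Hlk1; auto.
    - intro a. rewrite sumf_app, sumf_neg. destruct (Hlk a) as [vs [-> [_ Hle]]].
      specialize (Hle a (Hrefl a)). lra. }
  rewrite sumM_app in C1, C2. rewrite sumM_neg in C2.
  rewrite (sumM_agree lk Hlk1) in C1. lra.
Qed.

Definition ind_ (p : formula U) : (nat -> U) -> R := ind p.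

Definition Dc (g : (nat -> U) -> R) (t : R) : Prop :=
  exists l1 l2 c, (forall x, In x l1 -> D1 (snd x)) /\ (forall x, In x l2 -> D2 (snd x)) /\
    (forall a, g a <= sumf l1 a + sumf l2 a + c) /\ sumM m1 l1 + sumM m2 l2 + c <= t.

Lemma bnd_ind : forall p, bnd (nat -> U) (ind p).
Proof. intro p. exists 1. intro a. unfold ind. destruct excluded_middle_informative; rewrite ?Rabs_R1, ?Rabs_R0; lra. Qed.

Theorem AM : exists m : formula U -> R,
  isKMD (fun _ => True) m /\ (forall p, D1 p -> m p = m1 p) /\ (forall p, D2 p -> m p = m2 p).
Proof.
  destruct (HB (nat -> U) Dc) as [Lf [Ladd [Lscal Ldom]]].
  - intros g t g' t' [l1 [l2 [c [H1 [H2 [H3 H4]]]]]] [l1' [l2' [c' [H1' [H2' [H3' H4']]]]]].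
    exists (l1 ++ l1'), (l2 ++ l2'), (c + c'). repeat split; try (apply In_app2; auto).
    + intro a. rewrite !sumf_app. specialize (H3 a); specialize (H3' a); lra.
    + rewrite !sumM_app. lra.
  - intros g t r [l1 [l2 [c [H1 [H2 [H3 H4]]]]]] Hr.
    exists (scl r l1), (scl r l2), (r * c). repeat split; try (apply In_scl; auto).
    + intro a. rewrite !sumf_scl. specialize (H3 a).
      replace (r * sumf l1 a + r * sumf l2 a + r * c) with (r * (sumf l1 a + sumf l2 a + c)) by ring.
      apply Rmult_le_compat_l; lra.
    + rewrite !sumM_scl.
      replace (r * sumM m1 l1 + r * sumM m2 l2 + r * c) with (r * (sumM m1 l1 + sumM m2 l2 + c)) by ring.
      apply Rmult_le_compat_l; lra.
  - intros g [M HM]. exists M, nil, nil, M. repeat split; simpl; try tauto.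
    + intro a. specialize (HM a). assert (g a <= Rabs (g a)) by apply RRle_abs. lra.
    + lra.
  - intros t [l1 [l2 [c [H1 [H2 [H3 H4]]]]]].
    assert (- c <= sumM m1 l1 + sumM m2 l2).
    { apply mixed; auto. intro a; specialize (H3 a); lra. }
    lra.
  - exists (fun p => Lf (ind p)).
    assert (Hlow : forall p t, Dc (fun a => (-1) * ind p a) (-t) -> t <= Lf (ind p)).
    { intros p t HDc. assert (Hb : bnd (nat -> U) (fun a => (-1) * ind p a)).
      { destruct (bnd_ind p) as [M HM]. exists M. intro a. rewrite Rabs_mult.
        replace (Rabs (-1)) with 1 by (rewrite Rabs_left; lra). specialize (HM a). lra. }
      assert (H := Ldom _ _ Hb HDc). rewrite Lscal in H by apply bnd_ind. lra. }
    assert (Hup : forall p t, Dc (ind p) t -> Lf (ind p) <= t).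
    { intros p t HDc. apply Ldom; auto. apply bnd_ind. }
    split; [split; [|split; [|split]]|split].
    + intros p q _ _ Heq. f_equal. apply functional_extensionality; intro a. unfold ind.
      destruct excluded_middle_informative as [h1|h1]; destruct excluded_middle_informative as [h2|h2]; auto;
        exfalso; [apply h2|apply h1]; apply Heq; auto.
    + intros p _. apply Hlow. exists nil, nil, 0. repeat split; simpl; try tauto.
      * intro a. unfold ind. destruct excluded_middle_informative; lra.
      * lra.
    + apply Rle_antisym.
      * apply Hup. exists nil, nil, 1. repeat split; simpl; try tauto.
        -- intro a. unfold ind. destruct excluded_middle_informative; lra.
        -- lra.
      * apply Hlow. exists nil, nil, (-1). repeat split; simpl; try tauto.
        -- intro a. rewrite ind_T by apply sat_fTrue. lra.
        -- lra.
    + intros p q _ _ Hdis.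
      replace (ind (fOr p q)) with (fun a => ind p a + ind q a).
      * apply Ladd; apply bnd_ind.
      * apply functional_extensionality; intro a. 
        destruct (classic (sat a p)) as [Hp|Hp]; destruct (classic (sat a q)) as [Hq|Hq].
        -- exfalso; apply (Hdis a); auto.
        -- rewrite (ind_T p), (ind_F q), (ind_T (fOr p q)); auto; try lra; try (apply sat_fOr; auto).
        -- rewrite (ind_F p), (ind_T q), (ind_T (fOr p q)); auto; try lra; try (apply sat_fOr; auto).
        -- rewrite (ind_F p), (ind_F q), (ind_F (fOr p q)); auto; try lra; try (rewrite sat_fOr; tauto).
    + intros p Hp. apply Rle_antisym.
      * apply Hup. exists ((1, p) :: nil), nil, 0. repeat split; simpl; try tauto.
        -- intros x [<-|[]]; auto.
        -- intro a; lra.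
        -- lra.
      * apply Hlow. exists ((-1, p) :: nil), nil, 0. repeat split; simpl; try tauto.
        -- intros x [<-|[]]; auto.
        -- intro a; lra.
        -- lra.
    + intros p Hp. apply Rle_antisym.
      * apply Hup. exists nil, ((1, p) :: nil), 0. repeat split; simpl; try tauto.
        -- intros x [<-|[]]; auto.
        -- intro a; lra.
        -- lra.
      * apply Hlow. exists nil, ((-1, p) :: nil), 0. repeat split; simpl; try tauto.
        -- intros x [<-|[]]; auto.
        -- intro a; lra.
        -- lra.
Qed.

End AM.

Local Open Scope nat_scope.

Lemma sig_eq : forall (A : Type) (P : A -> Prop) (u v : {x | P x}), proj1_sig u = proj1_sig v -> u = v.
Proof. intros A P [x p] [y q]; simpl; intros ->. f_equal. apply proof_irrelevance. Qed.

Definition inj (X Y : Type) : Prop := exists f : X -> Y, forall u v, f u = f v -> u = v.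

Lemma inj_trans : forall X Y Z, inj X Y -> inj Y Z -> inj X Z.
Proof. intros X Y Z [f Hf] [g Hg]. exists (fun x => g (f x)). intros u v E. auto. Qed.

Lemma inj_refl : forall X, inj X X.
Proof. intros X. exists (fun x => x). auto. Qed.

Lemma inj_sum : forall X Y X' Y', inj X X' -> inj Y Y' -> inj (X + Y) (X' + Y').
Proof.
  intros X Y X' Y' [f Hf] [g Hg]. exists (fun s => match s with inl x => inl (f x) | inr y => inr (g y) end).
  intros [u|u] [v|v] E; inversion E; f_equal; auto.
Qed.

Section F2.
Variables X Y : Type.
Definition goodR (G : X -> Y -> Prop) : Prop :=
  (forall x y y', G x y -> G x y' -> y = y') /\ (forall x x' y, G x y -> G x' y -> x = x').
Record PR := { pg : X -> Y -> Prop; pgd : goodR pg }.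
Definition RlR (s t : PR) : Prop := forall x y, pg s x y -> pg t x y.

Lemma goodR0 : goodR (fun _ _ => False).
Proof. split; intros; contradiction. Qed.

Lemma comparability : inj X Y \/ inj Y X.
Proof.
  destruct (@ZLP PR (Build_PR _ goodR0) RlR) as [t Ht].
  - intros t x y; auto.
  - intros r s t H1 H2 x y H; auto.
  - intros A HA.
    assert (Hg : goodR (fun x y => exists s, A s /\ pg s x y)).
    { split.
      - intros x y y' [s [Hs H1]] [s' [Hs' H2]]. destruct (HA s s' Hs Hs') as [E|E].
        + apply (pgd s') with x; auto.
        + apply (pgd s) with x; auto.
      - intros x x' y [s [Hs H1]] [s' [Hs' H2]]. destruct (HA s s' Hs Hs') as [E|E].
        + apply (pgd s') with y; auto.
        + apply (pgd s) with y; auto. }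
    exists (Build_PR _ Hg). intros s Hs x y H. simpl. eauto.
  - destruct (classic (forall x, exists y, pg t x y)) as [Hx|Hx].
    + left. exists (fun x => proj1_sig (constructive_indefinite_description _ (Hx x))).
      intros u v E. destruct (constructive_indefinite_description _ (Hx u)) as [yu Hu].
      destruct (constructive_indefinite_description _ (Hx v)) as [yv Hv]. simpl in E. subst.
      apply (pgd t) with yv; auto.
    + destruct (classic (forall y, exists x, pg t x y)) as [Hy|Hy].
      * right. exists (fun y => proj1_sig (constructive_indefinite_description _ (Hy y))).
        intros u v E. destruct (constructive_indefinite_description _ (Hy u)) as [xu Hu].
        destruct (constructive_indefinite_description _ (Hy v)) as [xv Hv]. simpl in E. subst.
        apply (pgd t) with xv; auto.
      * exfalso. apply not_all_ex_not in Hx. destruct Hx as [x0 Hx0].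
        apply not_all_ex_not in Hy. destruct Hy as [y0 Hy0].
        assert (Hg : goodR (fun x y => pg t x y \/ (x = x0 /\ y = y0))).
        { split.
          - intros x y y' [H1|[-> ->]] [H2|[E ->]]; try subst; auto.
            + apply (pgd t) with x; auto.
            + exfalso; apply Hx0; eauto.
            + exfalso; apply Hx0; eauto.
          - intros x x' y [H1|[-> ->]] [H2|[-> E]]; try subst; auto.
            + apply (pgd t) with y; auto.
            + exfalso; apply Hy0; eauto.
            + exfalso; apply Hy0; eauto. }
        assert (H := Ht (Build_PR _ Hg) (fun x y H => or_introl H)).
        apply Hy0. exists x0. apply H. simpl. auto.
Qed.
End F2.

Lemma nat2 : inj (nat + nat) nat.
Proof.
  exists (fun s => match s with inl n => 2 * n | inr n => 2 * n + 1 end).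
  intros [u|u] [v|v] E; f_equal; lia.
Qed.

Section F1.
Variable K : Type.
Variable e : nat -> K.
Hypothesis He : forall u v, e u = e v -> u = v.

Definition goodH (H : bool * K -> K -> Prop) : Prop :=
  (forall p y y', H p y -> H p y' -> y = y') /\
  (forall p p' y, H p y -> H p' y -> p = p') /\
  (forall x, (exists y, H (true, x) y) <-> (exists y, H (false, x) y)) /\
  (forall p y, H p y -> exists y', H (true, y) y').

Definition H0 (p : bool * K) (y : K) : Prop :=
  exists n, fst p = true /\ snd p = e n /\ y = e (2 * n) \/ fst p = false /\ snd p = e n /\ y = e (2 * n + 1).

Lemma H0_good : goodH H0.
Proof.
  repeat split.
  - intros [b x] y y' [n Hn] [n' Hn']; simpl in *.
    destruct Hn as [[-> [-> ->]]|[-> [-> ->]]]; destruct Hn' as [[E1 [E2 ->]]|[E1 [E2 ->]]]; try discriminate;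
      apply He in E2; subst; auto.
  - intros [b x] [b' x'] y [n Hn] [n' Hn']; simpl in *.
    destruct Hn as [[-> [-> ->]]|[-> [-> ->]]]; destruct Hn' as [[-> [-> E]]|[-> [-> E]]];
      apply He in E; try lia; assert (n = n') by lia; subst; auto.
  - intros [y [n Hn]]; simpl in *. exists (e (2 * n + 1)), n. right.
    destruct Hn as [[_ [-> _]]|[? _]]; [simpl; auto|discriminate].
  - intros [y [n Hn]]; simpl in *. exists (e (2 * n)), n. left.
    destruct Hn as [[? _]|[_ [-> _]]]; [discriminate|simpl; auto].
  - intros [b x] y [n Hn]; simpl in *.
    destruct Hn as [[_ [_ ->]]|[_ [_ ->]]].
    + exists (e (2 * (2 * n))), (2 * n). left. simpl; auto.
    + exists (e (2 * (2 * n + 1))), (2 * n + 1). left. simpl; auto.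
Qed.

Record PH := { ph : bool * K -> K -> Prop; phg : goodH ph; ph0 : forall p y, H0 p y -> ph p y }.
Definition RlH (s t : PH) : Prop := forall p y, ph s p y -> ph t p y.

Lemma K2K : inj (K + K) K.
Proof.
  destruct (@ZLP PH (Build_PH _ H0_good (fun p y H => H)) RlH) as [t Ht].
  - intros t p y; auto.
  - intros r s t H1 H2 p y H; auto.
  - intros A HA. destruct (classic (exists s, A s)) as [[s0 Hs0]|Hn].
    2: { exists (Build_PH _ H0_good (fun p y H => H)). intros s Hs; exfalso; eauto. }
    set (G := fun p y => exists s, A s /\ ph s p y).
    assert (Hg : goodH G).
    { repeat split.
      - intros p y y' [s [Hs H1]] [s' [Hs' H2]]. destruct (HA s s' Hs Hs') as [E|E].
        + apply (phg s') with p; auto.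
        + apply (phg s) with p; auto.
      - intros p p' y [s [Hs H1]] [s' [Hs' H2]]. destruct (HA s s' Hs Hs') as [E|E].
        + apply (phg s') with y; auto.
        + apply (phg s) with y; auto.
      - intros [y [s [Hs H1]]]. destruct (proj1 (proj1 (proj2 (proj2 (phg s))) x)) as [y' Hy']; eauto.
        exists y', s; auto.
      - intros [y [s [Hs H1]]]. destruct (proj2 (proj1 (proj2 (proj2 (phg s))) x)) as [y' Hy']; eauto.
        exists y', s; auto.
      - intros p y [s [Hs H1]]. destruct (proj2 (proj2 (proj2 (phg s))) p y H1) as [y' Hy'].
        exists y', s; auto. }
    exists (Build_PH _ Hg (fun p y H => ex_intro _ s0 (conj Hs0 (ph0 s0 p y H)))).
    intros s Hs p y H. simpl. exists s; auto.
  -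
    set (H := ph t). destruct (phg t) as [Hf [Hi [Hd Hr]]]. fold H in Hf, Hi, Hd, Hr.
    set (S := fun x => exists y, H (true, x) y).
    assert (Hno : ~ exists e' : nat -> K, (forall u v, e' u = e' v -> u = v) /\ (forall n, ~ S (e' n))).
    { intros [e' [He' HS]].
      set (H' := fun p y => H p y \/ exists n, fst p = true /\ snd p = e' n /\ y = e' (2 * n) \/ fst p = false /\ snd p = e' n /\ y = e' (2 * n + 1)).
      assert (HSf : forall b x y, H (b, x) y -> S x).
      { intros [|] x y Hxy; [exists y; auto|]. apply Hd. eauto. }
      assert (Hg' : goodH H').
      { repeat split.
        - intros [b x] y y' [H1|[n Hn]] [H2|[n' Hn']]; simpl in *.
          + apply Hf with (b, x); auto.
          + exfalso. destruct Hn' as [[_ [-> _]]|[_ [-> _]]]; apply (HS n'); eapply HSf; eauto.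
          + exfalso. destruct Hn as [[_ [-> _]]|[_ [-> _]]]; apply (HS n); eapply HSf; eauto.
          + destruct Hn as [[-> [-> ->]]|[-> [-> ->]]]; destruct Hn' as [[E1 [E2 ->]]|[E1 [E2 ->]]]; try discriminate;
              apply He' in E2; subst; auto.
        - intros [b x] [b' x'] y [H1|[n Hn]] [H2|[n' Hn']]; simpl in *.
          + apply Hi with y; auto.
          + exfalso. destruct (Hr _ _ H1) as [y2 Hy2].
            destruct Hn' as [[_ [_ ->]]|[_ [_ ->]]]; eapply HS; exists y2; eauto.
          + exfalso. destruct (Hr _ _ H2) as [y2 Hy2].
            destruct Hn as [[_ [_ ->]]|[_ [_ ->]]]; eapply HS; exists y2; eauto.
          + destruct Hn as [[-> [-> ->]]|[-> [-> ->]]]; destruct Hn' as [[-> [-> E]]|[-> [-> E]]];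
              apply He' in E; try lia; assert (n = n') by lia; subst; auto.
        - intros [y [H1|[n Hn]]].
          + assert (exists y, H (false, x) y) as [y' Hy'] by (apply Hd; eauto). exists y'; left; auto.
          + simpl in Hn. exists (e' (2 * n + 1)). right. exists n. right.
            destruct Hn as [[_ [-> _]]|[? _]]; [simpl; auto|discriminate].
        - intros [y [H1|[n Hn]]].
          + assert (exists y, H (true, x) y) as [y' Hy'] by (apply Hd; eauto). exists y'; left; auto.
          + simpl in Hn. exists (e' (2 * n)). right. exists n. left.
            destruct Hn as [[? _]|[_ [-> _]]]; [discriminate|simpl; auto].
        - intros p y [H1|[n Hn]].
          + destruct (Hr _ _ H1) as [y' Hy']. exists y'; left; auto.
          + destruct Hn as [[_ [_ ->]]|[_ [_ ->]]].
            * exists (e' (2 * (2 * n))). right. exists (2 * n). left. simpl; auto.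
            * exists (e' (2 * (2 * n + 1))). right. exists (2 * n + 1). left. simpl; auto. }
      assert (Hsub := Ht (Build_PH _ Hg' (fun p y Hp => or_introl (ph0 t p y Hp))) (fun p y Hp => or_introl Hp)).
      apply (HS 0). exists (e' 0). apply Hsub. simpl. right. exists 0. left. simpl. auto. }
    assert (HS_e : forall n, S (e n)).
    { intro n. exists (e (2 * n)). apply (ph0 t). exists n. left. simpl; auto. }
    assert (Htot : forall b x, S x -> exists y, H (b, x) y).
    { intros [|] x Hx; auto. apply Hd; auto. }
    set (hf := fun b x => match excluded_middle_informative (exists y, H (b, x) y) with
                          | left P => proj1_sig (constructive_indefinite_description _ P) | right _ => x end).
    assert (Hhf : forall b x, S x -> H (b, x) (hf b x)).
    { intros b x Hx. unfold hf. destruct excluded_middle_informative as [P|P].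
      - destruct (constructive_indefinite_description _ P); auto.
      - exfalso; apply P; auto. }
    assert (Hhf_S : forall b x, S x -> S (hf b x)).
    { intros b x Hx. apply (Hr (b, x)). auto. }
    assert (Hhf_inj : forall b b' x x', S x -> S x' -> hf b x = hf b' x' -> b = b' /\ x = x').
    { intros b b' x x' Hx Hx' E. assert (Hb := Hhf b x Hx). assert (Hb' := Hhf b' x' Hx').
      rewrite E in Hb. assert (Eq := Hi _ _ _ Hb Hb'). inversion Eq; auto. }
    assert (HRS : inj {x | ~ S x} {x | S x}).
    { destruct (comparability {x | ~ S x} {x | S x}) as [Hc|[g Hg]]; auto.
      exfalso. apply Hno. exists (fun n => proj1_sig (g (exist _ (e n) (HS_e n)))). split.
      - intros u v E. apply sig_eq in E. apply Hg in E. apply (f_equal (@proj1_sig _ _)) in E. simpl in E. auto.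
      - intro n. apply (proj2_sig (g (exist _ (e n) (HS_e n)))). }
    destruct HRS as [r Hr'].
    set (rr := fun x => match excluded_middle_informative (S x) with
                        | left _ => x | right P => proj1_sig (r (exist _ x P)) end).
    assert (Hrr_S : forall x, S (rr x)).
    { intro x. unfold rr. destruct excluded_middle_informative as [P|P]; auto. apply (proj2_sig (r _)). }
    exists (fun s => match s with
                     | inl k => if excluded_middle_informative (S k) then hf true (hf true k) else hf false (hf true (rr k))
                     | inr k => if excluded_middle_informative (S k) then hf true (hf false k) else hf false (hf false (rr k))
                     end).
    assert (Hrr_inj : forall x x', ~ S x -> ~ S x' -> rr x = rr x' -> x = x').
    { intros x x' Hx Hx' E. unfold rr in E.
      destruct excluded_middle_informative as [P|P]; [contradiction|].
      destruct excluded_middle_informative as [P'|P']; [contradiction|].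
      apply sig_eq in E. apply Hr' in E. 
      apply (f_equal (@proj1_sig _ _)) in E. simpl in E. auto. }
    intros [u|u] [v|v] E;
      destruct (excluded_middle_informative (S u)) as [Su|Su];
      destruct (excluded_middle_informative (S v)) as [Sv|Sv];
      apply Hhf_inj in E; auto using Hhf_S; destruct E as [Eb E]; try discriminate;
      apply Hhf_inj in E; auto using Hhf_S; destruct E as [Eb2 E]; try discriminate;
      f_equal; auto.
Qed.
End F1.

Lemma K2K_gen : forall K, inj nat K -> inj (K + K) K.
Proof. intros K [e He]. apply (K2K K e He). Qed.

Local Open Scope R_scope.

Section Main.
Context {L : signature} (U : structure L).

Lemma Dalg_LF : forall (B : U -> Prop) n, Dalg (LF B n).
Proof.
  intros B n. unfold Dalg, LF. repeat split; simpl; intros; try tauto.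
Qed.

Lemma sat_feq : forall (a b : nat -> U) p, (forall i, a i = b i) -> (sat a p <-> sat b p).
Proof. intros a b p H. replace b with a; [tauto|]. apply functional_extensionality; auto. Qed.

Lemma shf0 : forall n i, shf 0 n i = (i + n)%nat.
Proof. intros; unfold shf; reflexivity. Qed.

Lemma isKMD_mono : forall (D D' : formula U -> Prop) m, isKMD D m -> (forall p, D' p -> D p) -> isKMD D' m.
Proof.
  intros D D' m [H1 [H2 [H3 H4]]] HD. repeat split; auto.
Qed.

Lemma isKMD_T : forall (D : formula U -> Prop) m, isKMD (fun _ => True) m -> isKMD D m.
Proof. intros D m H. apply (isKMD_mono (fun _ => True)); auto. Qed.

Lemma KM_transfer : forall (D D' : formula U -> Prop) m (T : formula U -> formula U) (sg : (nat -> U) -> (nat -> U)),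
  isKMD D m -> (forall p, D' p -> D (T p)) -> T (fTrue U) = fTrue U ->
  (forall p q, T (fOr p q) = fOr (T p) (T q)) -> (forall a p, sat a (T p) <-> sat (sg a) p) ->
  isKMD D' (fun p => m (T p)).
Proof.
  intros D D' m T sg [H1 [H2 [H3 H4]]] HT HT1 HTor Hsg. repeat split.
  - intros p q Hp Hq Heq. apply H1; auto. intro a. rewrite !Hsg. apply Heq.
  - intros p Hp. apply H2; auto.
  - rewrite HT1; auto.
  - intros p q Hp Hq Hd. rewrite HTor. apply H4; auto. intros a. rewrite !Hsg. apply Hd.
Qed.

Lemma KM_transfer_sem : forall (D D' : formula U -> Prop) m (T : formula U -> formula U) (sg : (nat -> U) -> (nat -> U)),
  Dalg D -> Dalg D' -> isKMD D m -> (forall p, D' p -> D (T p)) ->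
  (forall p, D' p -> forall a, sat a (T p) <-> sat (sg a) p) ->
  isKMD D' (fun p => m (T p)).
Proof.
  intros D D' m T sg HD HD' Hm HT Hsg. repeat split.
  - intros p q Hp Hq Heq. apply (m_inv Hm); auto. intro a. rewrite !Hsg by auto. apply Heq.
  - intros p Hp. apply (m_pos Hm); auto.
  - rewrite <- (m_true Hm). apply (m_inv Hm).
    + apply HT, D_true; auto.
    + apply D_true; auto.
    + intro a. rewrite Hsg by (apply D_true; auto). split; intros; apply sat_fTrue.
  - intros p q Hp Hq Hd. rewrite (@m_inv _ _ D m Hm (T (fOr p q)) (fOr (T p) (T q))).
    + apply (m_add Hm); auto. intro a. rewrite !Hsg by auto. apply Hd.
    + apply HT, D_or; auto.
    + apply D_or; auto.
    + intro a. rewrite (Hsg (fOr p q)) by (apply D_or; auto). rewrite !sat_fOr. rewrite (Hsg p Hp), (Hsg q Hq). tauto.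
Qed.

Definition fAllN (n : nat) (p : formula U) : formula U := fNeg (fExN n (fNeg p)).

Lemma sat_fAllN : forall n p (a : nat -> U), sat a (fAllN n p) <-> forall b, sat (app U n b a) p.
Proof.
  intros n p a. unfold fAllN. simpl. rewrite sat_fExN. split.
  - intros H b. apply NNPP; intro Hn. apply H. exists b. simpl. auto.
  - intros H [b Hb]. simpl in Hb. auto.
Qed.

Lemma LF_fAllN : forall (B : U -> Prop) n N p, LF B (n + N) p -> LF B N (fAllN n p).
Proof.
  intros B n N p [Hb Hp]. split.
  - unfold fAllN. simpl. apply fbound_fExN. simpl. auto.
  - unfold fAllN. simpl. apply fparams_fExN. simpl. auto.
Qed.

Lemma fparams_mono : forall (P Q : U -> Prop) p, (forall x, P x -> Q x) -> fparams P p -> fparams Q p.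
Proof.
  assert (Ht : forall (P Q : U -> Prop) t, (forall x, P x -> Q x) -> tparams P t -> tparams Q t).
  { intros P Q t HPQ; induction t; simpl; auto. }
  intros P Q p HPQ; induction p; simpl; intuition eauto.
Qed.

Lemma LF_mono : forall (P Q : U -> Prop) n N p, (forall x, P x -> Q x) -> (n <= N)%nat -> LF P n p -> LF Q N p.
Proof. intros P Q n N p H1 H2 [H3 H4]. split; [eapply fbound_mono; eauto|eapply fparams_mono; eauto]. Qed.

Lemma fparams_allU : forall p, fparams (allU U) p.
Proof.
  assert (Ht : forall t, tparams (allU U) t) by (intro t; induction t; simpl; auto; exact I).
  intro p; induction p; simpl; auto.
Qed.

Lemma LF_allU : forall B n p, LF B n p -> LF (allU U) n p.
Proof. intros B n p [H1 H2]; split; auto using fparams_allU. Qed.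

Lemma fbound_fAllB_end : forall n m (p : formula U), fbound (n + m) p -> fbound n (fAllB n m p).
Proof.
  intros n m p H. unfold fAllB. simpl. apply fbound_fExN. simpl.
  eapply fbound_rename; [|exact H]. intros i Hi. unfold blk.
  destruct (Nat.ltb_spec i n); [lia|]. destruct (Nat.ltb_spec i (n+m)); lia.
Qed.

Lemma upd_rel : forall n m (a a' : nat -> U), (forall i, (i < n \/ n + m <= i)%nat -> a i = a' i) ->
  upd U n m a (fun j => a' (n + j)%nat) = a'.
Proof.
  intros n m a a' H. apply functional_extensionality; intro i. unfold upd.
  destruct (Nat.ltb_spec i n); [apply H; lia|]. destruct (Nat.ltb_spec i (n+m)); [f_equal; lia|apply H; lia].
Qed.

Lemma upd_rel2 : forall n m (a : nat -> U) b i, (i < n \/ n + m <= i)%nat -> upd U n m a b i = a i.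
Proof.
  intros n m a b i H. unfold upd. destruct (Nat.ltb_spec i n); auto. destruct (Nat.ltb_spec i (n+m)); auto; lia.
Qed.

Definition indep_lo (n : nat) (p : formula U) : Prop :=
  forall a b, (forall i, (n <= i)%nat -> a i = b i) -> (sat a p <-> sat b p).
Definition indep_mid (n m : nat) (p : formula U) : Prop :=
  forall a b, (forall i, (i < n \/ n + m <= i)%nat -> a i = b i) -> (sat a p <-> sat b p).

Lemma Dalg_and : forall (D D' : formula U -> Prop), Dalg D -> Dalg D' -> Dalg (fun p => D p /\ D' p).
Proof.
  intros D D' [H1 [H2 H3]] [H1' [H2' H3']]. repeat split; intuition.
Qed.

Lemma Dalg_indep_lo : forall n, Dalg (indep_lo n).
Proof.
  intro n. unfold Dalg, indep_lo. split; [|split].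
  - intros a b _; simpl; tauto.
  - intros p Hp a b Hab; simpl; rewrite (Hp a b Hab); tauto.
  - intros p q Hp Hq a b Hab; simpl; rewrite (Hp a b Hab), (Hq a b Hab); tauto.
Qed.

Lemma Dalg_indep_mid : forall n m, Dalg (indep_mid n m).
Proof.
  intros n m. unfold Dalg, indep_mid. split; [|split].
  - intros a b _; simpl; tauto.
  - intros p Hp a b Hab; simpl; rewrite (Hp a b Hab); tauto.
  - intros p q Hp Hq a b Hab; simpl; rewrite (Hp a b Hab), (Hq a b Hab); tauto.
Qed.

Lemma EXT1 : forall (A : U -> Prop) n m (lam mu : formula U -> R),
  isKM A (n + m) lam -> isKM (allU U) n mu -> (forall p, LF A n p -> lam p = mu p) ->
  exists om, isKMD (fun _ => True) om /\ (forall p, LF (allU U) n p -> om p = mu p) /\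
    (forall p, LF A (n + m) p -> om p = lam p).
Proof.
  intros A n m lam mu Hlam Hmu Hag.
  destruct (AM U (LF (allU U) n) (LF A (n + m)) mu lam (Dalg_LF _ _) (Dalg_LF _ _) Hmu Hlam
    (fun a a' => forall i, (i < n)%nat -> a i = a' i) (fun a i _ => eq_refl)) with (pr := @fAllB L U n m)
    as [om [H1 [H2 H3]]].
  - intros p [Hb _] a a' Hr. apply (sat_ext p a a' Hb Hr).
  - intros q [Hb Hp]. split; [|split].
    + split; [apply fbound_fAllB_end; auto|apply fparams_allU].
    + split; [apply fbound_fAllB; auto|apply fparams_fAllB; auto].
    + intro a. rewrite sat_fAllB. split.
      * intros H a' Hr. specialize (H (fun j => a' (n + j)%nat)).
        rewrite (sat_ext q _ a' Hb) in H; auto.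
        intros i Hi. unfold upd. destruct (Nat.ltb_spec i n); [apply Hr; auto|].
        destruct (Nat.ltb_spec i (n+m)); [f_equal; lia|lia].
      * intros H b. apply H. intros i Hi. rewrite upd_rel2; auto.
  - intros p [Hb1 _] [_ Hp2]. rewrite Hag; auto. split; auto.
  - exists om. split; auto.
Qed.

Lemma sat_fAllB_rel : forall n m p (a : nat -> U),
  sat a (fAllB n m p) <-> forall a', (forall i, (i < n \/ n + m <= i)%nat -> a i = a' i) -> sat a' p.
Proof.
  intros n m p a. rewrite sat_fAllB. split.
  - intros H a' Hr. rewrite <- (upd_rel n m a a' Hr). auto.
  - intros H b. apply H. intros i Hi. rewrite upd_rel2; auto.
Qed.

Lemma GLUE : forall n m k (w1 w2 : formula U -> R),
  isKMD (fun _ => True) w1 -> isKMD (fun _ => True) w2 ->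
  (forall p, LF (allU U) (n + m) p -> indep_lo n p -> w1 p = w2 (fAllN n p)) ->
  exists rho, isKMD (fun _ => True) rho /\ (forall p, LF (allU U) (n + m) p -> rho p = w1 p) /\
    (forall q, LF (allU U) (m + k) q -> rho (flift 0 n q) = w2 q).
Proof.
  intros n m k w1 w2 Hw1 Hw2 Hag.
  set (D2 := fun p => LF (allU U) (n + m + k) p /\ indep_lo n p).
  assert (HD2 : Dalg D2) by (apply Dalg_and; [apply Dalg_LF|apply Dalg_indep_lo]).
  assert (Hm2 : isKMD D2 (fun p => w2 (fAllN n p))).
  { apply (KM_transfer_sem (fun _ => True) D2 w2 _ (fun a i => a (i - n)%nat)); auto.
    - repeat split; auto.
    - intros p [_ Hind] a. rewrite sat_fAllN. split.
      + intros H. specialize (H a). rewrite <- (Hind (app U n a a)); auto.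
        intros i Hi. unfold app. destruct (Nat.ltb_spec i n); [lia|auto].
      + intros H b. rewrite (Hind (app U n b a) (fun i => a (i - n)%nat)); auto.
        intros i Hi. unfold app. destruct (Nat.ltb_spec i n); [lia|auto]. }
  destruct (AM U (LF (allU U) (n + m)) D2 w1 _ (Dalg_LF _ _) HD2 (isKMD_T _ _ Hw1) Hm2
    (fun a a' => forall i, (i < n + m)%nat -> a i = a' i) (fun a i _ => eq_refl)) with (pr := @fAllB L U (n + m) k)
    as [rho [H1 [H2 H3]]].
  - intros p [Hb _] a a' Hr. apply (sat_ext p a a' Hb Hr).
  - intros q [[Hb Hp] Hind]. split; [|split].
    + split; [apply fbound_fAllB_end; auto|apply fparams_allU].
    + split; [split; [apply fbound_fAllB; auto|apply fparams_allU]|].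
      intros a b Hab. rewrite !sat_fAllB.
      assert (E : forall b', sat (upd U (n+m) k a b') q <-> sat (upd U (n+m) k b b') q).
      { intro b'. apply Hind. intros i Hi. unfold upd. destruct (Nat.ltb_spec i (n+m)); [apply Hab; lia|].
        destruct (Nat.ltb_spec i (n+m+k)); auto. }
      split; intros H b'; [rewrite <- E|rewrite E]; auto.
    + intro a. rewrite sat_fAllB. split.
      * intros H a' Hr. specialize (H (fun j => a' (n + m + j)%nat)).
        rewrite (sat_ext q _ a' Hb) in H; auto.
        intros i Hi. unfold upd. destruct (Nat.ltb_spec i (n+m)); [apply Hr; auto|].
        destruct (Nat.ltb_spec i (n+m+k)); [f_equal; lia|lia].
      * intros H b. apply H. intros i Hi. rewrite upd_rel2; auto.
  - intros p Hp1 [_ Hp2]. apply Hag; auto.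
  - exists rho. split; [|split]; auto.
    intros q Hq. rewrite H3.
    + apply (proj1 Hw2); auto. intro a. rewrite sat_fAllN.
      assert (E : forall b i, app U n b a (shf 0 n i) = a i).
      { intros b i. rewrite shf0. unfold app. destruct (Nat.ltb_spec (i+n) n); [lia|]. f_equal; lia. }
      split.
      * intros H. specialize (H a). rewrite sat_lift in H. rewrite (sat_feq _ a q (E a)) in H. auto.
      * intros H b. rewrite sat_lift. rewrite (sat_feq _ a q (E b)). auto.
    + destruct Hq as [Hb _]. split; [split; [|apply fparams_allU]|].
      * eapply fbound_mono; [apply fbound_lift; eauto|lia].
      * intros a b Hab. rewrite !sat_lift. apply sat_feq. intro i. rewrite shf0. apply Hab. lia.
Qed.

Definition hh (n m : nat) : nat -> nat := fun i => if Nat.ltb i n then i else (i - m)%nat.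

Definition gg (n m : nat) : nat -> nat :=
  fun i => if Nat.ltb i n then (m + i)%nat else if Nat.ltb i (n + m) then (i - n)%nat else i.
Definition thm (n m : nat) (p : formula U) : formula U := fNeg (fExN m (fNeg (frename (gg n m) p))).

Lemma sat_thm : forall n m p (a : nat -> U), indep_mid n m p -> (sat a (thm n m p) <-> sat (fun i => a (hh n m i)) p).
Proof.
  intros n m p a Hind. unfold thm. simpl. rewrite sat_fExN.
  assert (E : forall b, sat (fun i => app U m b a (gg n m i)) p <-> sat (fun i => a (hh n m i)) p).
  { intro b. apply Hind. intros i Hi. unfold app, gg, hh.
    destruct (Nat.ltb_spec i n).
    - destruct (Nat.ltb_spec (m + i) m); [lia|]. f_equal; lia.
    - destruct (Nat.ltb_spec i (n + m)); [lia|]. destruct (Nat.ltb_spec i m); [lia|]. auto. }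
  split.
  - intros H. apply E with a. apply NNPP; intro Hn. apply H. exists a. simpl. rewrite sat_rename. auto.
  - intros H [b Hb]. simpl in Hb. rewrite sat_rename in Hb. apply Hb, E; auto.
Qed.

Lemma LF_thm : forall (B : U -> Prop) n m k p, LF B (n + m + k) p -> LF B (n + k) (thm n m p).
Proof.
  intros B n m k p [Hb Hp]. split.
  - unfold thm. simpl. apply fbound_fExN. simpl. eapply fbound_rename; [|exact Hb].
    intros i Hi. unfold gg. destruct (Nat.ltb_spec i n); [lia|]. destruct (Nat.ltb_spec i (n + m)); lia.
  - unfold thm. simpl. apply fparams_fExN. simpl. apply fparams_rename; auto.
Qed.

Lemma MID : forall n m k (C : U -> Prop) (om rho : formula U -> R),
  isKM (allU U) (n + k) om -> isKMD (fun _ => True) rho ->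
  (forall p, LF C (n + m + k) p -> indep_mid n m p -> om (thm n m p) = rho p) ->
  exists rho', isKMD (fun _ => True) rho' /\ (forall p, LF C (n + m + k) p -> rho' p = rho p) /\
    (forall p, LF (allU U) (n + m + k) p -> indep_mid n m p -> rho' p = om (thm n m p)).
Proof.
  intros n m k C om rho Hom Hrho Hag.
  set (D1 := fun p => LF (allU U) (n + m + k) p /\ indep_mid n m p).
  assert (HD1 : Dalg D1) by (apply Dalg_and; [apply Dalg_LF|apply Dalg_indep_mid]).
  assert (Hm1 : isKMD D1 (fun p => om (thm n m p))).
  { apply (KM_transfer_sem (LF (allU U) (n + k)) D1 om _ (fun a i => a (hh n m i))); auto.
    - apply Dalg_LF.
    - intros p [Hp _]. apply LF_thm; auto.
    - intros p [_ Hind] a. apply sat_thm; auto. }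
  destruct (AM U D1 (LF C (n + m + k)) _ rho HD1 (Dalg_LF _ _) Hm1 (isKMD_T _ _ Hrho)
    (fun a a' => forall i, (i < n \/ n + m <= i)%nat -> a i = a' i) (fun a i _ => eq_refl)) with (pr := @fAllB L U n m)
    as [rho' [H1 [H2 H3]]].
  - intros p [_ Hind] a a' Hr. apply Hind; auto.
  - intros q [Hb Hp]. split; [|split].
    + split; [split; [apply fbound_fAllB; auto|apply fparams_allU]|].
      intros a b Hab. rewrite !sat_fAllB_rel. split; intros H a' Hr; apply H; intros i Hi;
        [rewrite Hab|rewrite <- Hab]; auto.
    + split; [apply fbound_fAllB; auto|apply fparams_fAllB; auto].
    + intro a. apply sat_fAllB_rel.
  - intros p Hp1 Hp2. apply Hag; auto. apply Hp1.
  - exists rho'. split; [|split]; auto.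
    intros p Hp Hind. rewrite H2; auto. split; auto.
Qed.

Fixpoint dgf (n j : nat) : formula U :=
  match j with 0 => fTrue U | S j => fAnd (fEq (tvar U j) (tvar U (n + j))) (dgf n j) end.

Lemma sat_dgf : forall n j a, sat a (dgf n j) <-> forall i, (i < j)%nat -> a i = a (n + i)%nat.
Proof.
  intros n j a; induction j; simpl.
  - split; intros; [lia|]. unfold fTrue; simpl; tauto.
  - rewrite IHj. split.
    + intros [H1 H2] i Hi. destruct (Nat.eq_dec i j); [subst; auto|apply H2; lia].
    + intros H; split; auto.
Qed.

Lemma LF_dgf : forall (A : U -> Prop) n j, (j <= n)%nat -> LF A (n + n) (dgf n j).
Proof.
  intros A n j; induction j; intros Hj; simpl.
  - split; simpl; auto.
  - destruct IHj as [H1 H2]; [lia|]. split; simpl; repeat split; auto; lia.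
Qed.

Lemma one_and : forall (D : formula U -> Prop) m e p, Dalg D -> isKMD D m -> D e -> D p -> m e = 1 ->
  m p = m (fAnd p e).
Proof.
  intros D m e p HD Hm He Hp H1.
  rewrite (@m_split _ _ D m HD Hm p e Hp He).
  assert (Hc := @m_nonneg_compl _ _ D m HD Hm e He). rewrite H1 in Hc.
  assert (Hs := @m_split _ _ D m HD Hm (fNeg e) p (D_neg HD e He) Hp).
  assert (0 <= m (fAnd (fNeg e) (fNeg p))) by (apply (m_pos Hm); apply D_and; auto; apply D_neg; auto; apply D_neg; auto).
  assert (0 <= m (fAnd (fNeg e) p)) by (apply (m_pos Hm); apply D_and; auto; apply D_neg; auto).
  rewrite (@m_inv _ _ D m Hm (fAnd p (fNeg e)) (fAnd (fNeg e) p)); [lra| | |].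
  - apply D_and; auto; apply D_neg; auto.
  - apply D_and; auto; apply D_neg; auto.
  - intro a; simpl; tauto.
Qed.

Lemma REFL : forall K n (mu : formula U -> R), (exists k : K, True) -> isKM (allU U) n mu -> geE K n n mu mu.
Proof.
  intros K n mu [k0 _] Hmu.
  set (A := fun _ : U => False).
  exists A. split.
  - split.
    + exists (fun s : {x | A x} => match proj2_sig s with end). intros [u Hu]; destruct Hu.
    + intros [g _]. destruct (proj2_sig (g k0)).
  - set (dd := fun i => if Nat.ltb i n then i else (i - n)%nat).
    assert (Hdd : forall p, LF A (n + n) p -> LF (allU U) n (frename dd p)).
    { intros p [Hb _]. split; [|apply fparams_allU]. eapply fbound_rename; [|exact Hb].
      intros i Hi. unfold dd. destruct (Nat.ltb_spec i n); lia. }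
    exists (fun p => mu (frename dd p)). split; [|split].
    + apply (KM_transfer (LF (allU U) n) (LF A (n + n)) mu _ (fun a i => a (dd i)) Hmu); auto.
      intros a p; apply sat_rename.
    + intros p Hp. apply (proj1 Hmu).
      * apply Hdd. eapply LF_mono; [| |exact Hp]; auto; lia.
      * apply LF_allU with A; auto.
      * intro a. rewrite sat_rename. apply (sat_ext p _ _ (proj1 Hp)).
        intros i Hi. unfold dd. destruct (Nat.ltb_spec i n); auto; lia.
    + intros om Hom Hl Hx q Hq.
      assert (HD := Dalg_LF (allU U) (n + n)).
      assert (Hdg : LF (allU U) (n + n) (dgf n n)) by (apply LF_dgf; lia).
      assert (Hone : om (dgf n n) = 1).
      { rewrite Hl by (apply LF_dgf; lia). rewrite <- (proj1 (proj2 (proj2 Hmu))).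
        apply (proj1 Hmu).
        - apply Hdd. apply LF_dgf; lia.
        - split; simpl; auto.
        - intro a. rewrite sat_rename, sat_dgf. unfold fTrue; simpl. split; [tauto|].
          intros _ i Hi. unfold dd. destruct (Nat.ltb_spec i n); [|lia].
          destruct (Nat.ltb_spec (n + i) n); [lia|]. f_equal; lia. }
      assert (Hq2 : LF (allU U) (n + n) (flift 0 n q)).
      { destruct Hq as [Hb _]. split; [|apply fparams_allU]. apply fbound_lift; auto. }
      assert (Hq3 : LF (allU U) (n + n) q) by (eapply LF_mono; [| |exact Hq]; auto; lia).
      rewrite (one_and (LF (allU U) (n + n)) om (dgf n n) (flift 0 n q) HD Hom Hdg Hq2 Hone).
      rewrite (@m_inv _ _ _ om Hom (fAnd (flift 0 n q) (dgf n n)) (fAnd q (dgf n n))).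
      * rewrite <- (one_and (LF (allU U) (n + n)) om (dgf n n) q HD Hom Hdg Hq3 Hone). apply Hx; auto.
      * apply D_and; auto.
      * apply D_and; auto.
      * intro a. simpl. rewrite sat_dgf, sat_lift. split; intros [H1 H2]; split; auto.
        -- rewrite (sat_ext q (fun i => a (shf 0 n i)) a (proj1 Hq)) in H1; auto.
           intros i Hi. rewrite shf0. rewrite (H2 i Hi). f_equal; lia.
        -- rewrite (sat_ext q (fun i => a (shf 0 n i)) a (proj1 Hq)); auto.
           intros i Hi. rewrite shf0. rewrite (H2 i Hi). f_equal; lia.
Qed.

End Main.


Section Fin.
Context {L : signature} (U : structure L).

Lemma small_union : forall K (A B : U -> Prop), big L K -> small U K A -> small U K B ->
  small U K (fun x => A x \/ B x).
Proof.
  intros K A B [Hbig1 Hbig2] [HA1 HA2] [HB1 HB2].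
  assert (HnK : inj nat K) by (eapply inj_trans; [|exact Hbig1]; exists (fun n => inl (inl n)); intros u v E; inversion E; auto).
  split.
  - assert (Hs : inj {x | A x \/ B x} ({x | A x} + {x | B x})).
    { exists (fun s => match excluded_middle_informative (A (proj1_sig s)) with
                       | left H => inl (exist _ _ H)
                       | right H => inr (exist _ _ (match proj2_sig s with or_introl a => False_ind _ (H a) | or_intror b => b end))
                       end).
      intros u v E. destruct excluded_middle_informative; destruct excluded_middle_informative; inversion E; apply sig_eq; auto. }
    eapply inj_trans; [exact Hs|]. eapply inj_trans; [apply inj_sum; [exact HA1|exact HB1]|]. apply K2K_gen; auto.
  - intros [g Hg].
    set (KA := {k : K | A (proj1_sig (g k))}). set (KB := {k : K | ~ A (proj1_sig (g k))}).
    assert (HKA : inj KA {x | A x}).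
    { exists (fun s : KA => exist A (proj1_sig (g (proj1_sig s))) (proj2_sig s)).
      intros u v E. apply sig_eq. apply Hg. apply sig_eq. apply (f_equal (@proj1_sig _ _)) in E. auto. }
    assert (HKB : inj KB {x | B x}).
    { exists (fun s : KB => exist B (proj1_sig (g (proj1_sig s)))
        (match proj2_sig (g (proj1_sig s)) with or_introl a => False_ind _ (proj2_sig s a) | or_intror b => b end)).
      intros u v E. apply sig_eq. apply Hg. apply sig_eq. apply (f_equal (@proj1_sig _ _)) in E. auto. }
    assert (HK : inj K (KA + KB)).
    { exists (fun k => match excluded_middle_informative (A (proj1_sig (g k))) with
                       | left H => inl (exist _ k H) | right H => inr (exist _ k H) end).
      intros u v E. destruct excluded_middle_informative; destruct excluded_middle_informative; inversion E; auto. }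
    assert (Hnat : inj nat (nat + funcs L + rels L)) by (exists (fun n => inl (inl n)); intros u v E; inversion E; auto).
    destruct (comparability KA KB) as [Hab|Hba].
    + assert (HK2 : inj K (KB + KB)) by (eapply inj_trans; [exact HK|apply inj_sum; [exact Hab|apply inj_refl]]).
      destruct (comparability nat KB) as [Hn|Hn].
      * apply HB2. eapply inj_trans; [exact HK2|]. eapply inj_trans; [apply K2K_gen; auto|exact HKB].
      * apply Hbig2. eapply inj_trans; [exact HK2|]. eapply inj_trans; [apply inj_sum; exact Hn|].
        eapply inj_trans; [apply nat2|exact Hnat].
    + assert (HK2 : inj K (KA + KA)) by (eapply inj_trans; [exact HK|apply inj_sum; [apply inj_refl|exact Hba]]).
      destruct (comparability nat KA) as [Hn|Hn].
      * apply HA2. eapply inj_trans; [exact HK2|]. eapply inj_trans; [apply K2K_gen; auto|exact HKA].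
      * apply Hbig2. eapply inj_trans; [exact HK2|]. eapply inj_trans; [apply inj_sum; exact Hn|].
        eapply inj_trans; [apply nat2|exact Hnat].
Qed.


Lemma lift_fAllN : forall n (p : formula U), indep_lo U n p -> fequiv (flift 0 n (fAllN U n p)) p.
Proof.
  intros n p Hind a. rewrite sat_lift, sat_fAllN.
  assert (E : forall b i, (n <= i)%nat -> app U n b (fun i => a (shf 0 n i)) i = a i).
  { intros b i Hi. unfold app. destruct (Nat.ltb_spec i n); [lia|]. rewrite shf0. f_equal; lia. }
  split.
  - intros H. specialize (H a). rewrite (Hind _ a) in H; auto.
  - intros H b. rewrite (Hind _ a); auto.
Qed.

Lemma sat_lift2 : forall n m (r : formula U) a,
  sat a (flift 0 n (flift 0 m r)) <-> sat (fun i => a (i + m + n)%nat) r.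
Proof.
  intros. rewrite !sat_lift. apply sat_feq. intro i. rewrite !shf0. reflexivity.
Qed.

Theorem TRANS : forall K (n m k : nat) (mu nu eta : formula U -> R),
  big L K ->
  isKM (allU U) n mu -> isKM (allU U) m nu -> isKM (allU U) k eta ->
  geE K n m mu nu -> geE K m k nu eta -> geE K n k mu eta.
Proof.
  intros K n m k mu nu eta Hbig Hmu Hnu Heta [A [HsA [l1 [Hl1 [Hl1x Hl1P]]]]] [B [HsB [l2 [Hl2 [Hl2x Hl2P]]]]].
  set (C := fun x => A x \/ B x).
  assert (HAC : forall x, A x -> C x) by (intros; left; auto).
  assert (HBC : forall x, B x -> C x) by (intros; right; auto).
  exists C. split; [apply small_union; auto|].
  destruct (EXT1 U A n m l1 mu Hl1 Hmu Hl1x) as [w1 [Hw1 [Hw1mu Hw1l]]].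
  assert (Hw1nu : forall q, LF (allU U) m q -> w1 (flift 0 n q) = nu q).
  { apply Hl1P; auto. apply isKMD_T; auto. }
  destruct (EXT1 U B m k l2 nu Hl2 Hnu Hl2x) as [w2 [Hw2 [Hw2nu Hw2l]]].
  assert (Hw2eta : forall r, LF (allU U) k r -> w2 (flift 0 m r) = eta r).
  { apply Hl2P; auto. apply isKMD_T; auto. }
  destruct (GLUE U n m k w1 w2 Hw1 Hw2) as [rho [Hrho [Hrho1 Hrho2]]].
  { intros p Hp Hind. rewrite Hw2nu by (apply LF_fAllN; auto).
    rewrite <- Hw1nu by (apply LF_fAllN; auto).
    apply (proj1 Hw1); auto. intro a. symmetry. apply (lift_fAllN n p Hind a). }
  exists (fun p => rho (flift n m p)). split; [|split].
  - apply (KM_transfer U (fun _ => True) (LF C (n + k)) rho (flift n m) (fun a i => a (shf n m i)) Hrho); auto.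
    intros a p; apply sat_lift.
  - intros p Hp. rewrite <- Hw1mu by (apply LF_allU with C; auto).
    rewrite <- Hrho1 by (apply LF_allU with C; eapply LF_mono; [| |exact Hp]; auto; lia).
    apply (proj1 Hrho); auto. intro a. rewrite sat_lift. apply (sat_ext p _ _ (proj1 Hp)).
    intros i Hi. unfold shf. destruct (Nat.ltb_spec i n); [auto|lia].
  - intros om Hom Hl3 Hx r Hr.
    destruct (MID U n m k C om rho Hom Hrho) as [rho' [Hr' [Hr'C Hr'D]]].
    { intros p Hp Hind. rewrite Hl3 by (apply LF_thm; auto).
      apply (proj1 Hrho); auto. intro a. rewrite sat_lift, sat_thm; auto.
      apply Hind. intros i Hi. unfold hh, shf. destruct (Nat.ltb_spec i n).
      - destruct (Nat.ltb_spec i n); [auto|lia].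
      - destruct (Nat.ltb_spec (i - m) n); [lia|]. f_equal; lia. }
    assert (Hr'nu : forall q, LF (allU U) m q -> rho' (flift 0 n q) = nu q).
    { apply Hl1P.
      - apply isKMD_T; auto.
      - intros p Hp. rewrite Hr'C by (eapply LF_mono; [| |exact Hp]; auto; lia).
        rewrite Hrho1 by (apply LF_allU with A; auto). apply Hw1l; auto.
      - intros p Hp. 
        assert (Hind : indep_mid U n m p).
        { intros a b Hab. apply (sat_ext p _ _ (proj1 Hp)). intros i Hi; apply Hab; lia. }
        rewrite Hr'D; auto; [|eapply LF_mono; [| |exact Hp]; auto; lia].
        rewrite <- Hx by auto. apply (proj1 Hom).
        + apply LF_thm. eapply LF_mono; [| |exact Hp]; auto; lia.
        + eapply LF_mono; [| |exact Hp]; auto; lia.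
        + intro a. rewrite sat_thm; auto. apply (sat_ext p _ _ (proj1 Hp)).
          intros i Hi. unfold hh. destruct (Nat.ltb_spec i n); [auto|lia]. }
    assert (Hs2 : forall r, LF (allU U) k r -> rho' (flift 0 n (flift 0 m r)) = eta r).
    { apply (Hl2P (fun q => rho' (flift 0 n q))).
      - apply (KM_transfer U (fun _ => True) (LF (allU U) (m + k)) rho' (flift 0 n) (fun a i => a (shf 0 n i)) Hr'); auto.
        intros a p; apply sat_lift.
      - intros p Hp. rewrite Hr'C.
        + rewrite Hrho2 by (apply LF_allU with B; auto). apply Hw2l; auto.
        + destruct Hp as [Hb Hpp]. split.
          * eapply fbound_mono; [apply fbound_lift; eauto|lia].
          * apply fparams_lift. eapply fparams_mono; [|exact Hpp]; auto.
      - intros q Hq. apply Hr'nu; auto. }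
    rewrite <- (Hs2 r Hr).
    assert (HLphi : LF (allU U) (n + m + k) (flift 0 n (flift 0 m r))).
    { destruct Hr as [Hb _]. split; [|apply fparams_allU].
      eapply fbound_mono; [apply fbound_lift, fbound_lift; eauto|lia]. }
    assert (Hind : indep_mid U n m (flift 0 n (flift 0 m r))).
    { intros a b Hab. rewrite !sat_lift2. apply sat_feq. intro i. apply Hab. lia. }
    rewrite Hr'D; auto.
    apply (proj1 Hom).
    + destruct Hr as [Hb _]. split; [|apply fparams_allU].
      eapply fbound_mono; [apply fbound_lift; eauto|lia].
    + apply LF_thm; auto.
    + intro a. rewrite sat_thm, sat_lift2, sat_lift; auto. apply sat_feq. intro i.
      rewrite shf0. unfold hh. destruct (Nat.ltb_spec (i + m + n) n); [lia|]. f_equal; lia.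
Qed.

End Fin.

Theorem theorem3p13_dev :
  forall (L : signature) (U : structure L) (K : Type),
    monster U K ->
    (forall (n : nat) (mu : formula U -> R),
        @isKM L U (allU U) n mu -> @geE L U K n n mu mu) /\
    (forall (n m k : nat) (mu nu eta : formula U -> R),
        @isKM L U (allU U) n mu -> @isKM L U (allU U) m nu -> @isKM L U (allU U) k eta ->
        @geE L U K n m mu nu -> @geE L U K m k nu eta -> @geE L U K n k mu eta).
Proof.
  intros L U K [Hbig _]. split.
  - intros n mu Hmu. apply (REFL U K n mu); auto. destruct Hbig as [[f _] _]. exists (f (inl (inl 0%nat))). auto.
  - intros n m k mu nu eta H1 H2 H3 H4 H5. exact (TRANS U K n m k mu nu eta Hbig H1 H2 H3 H4 H5).
Qed.

Theorem theorem3p13 :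
  forall (L : signature) (U : structure L) (K : Type),
    monster U K ->
    (forall (n : nat) (mu : formula U -> R),
        @isKM L U (allU U) n mu -> @geE L U K n n mu mu) /\
    (forall (n m k : nat) (mu nu eta : formula U -> R),
        @isKM L U (allU U) n mu -> @isKM L U (allU U) m nu -> @isKM L U (allU U) k eta ->
        @geE L U K n m mu nu -> @geE L U K m k nu eta -> @geE L U K n k mu eta).
Proof.
  exact theorem3p13_dev.
Qed.
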